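(* Let $h$ be a smooth function on a neighborhood of $(0,0)$ whose Taylor expansion at $(0,0)$ is $h(x,y)=a^2x^2+b^2y^2+\sum_{m+n\ge3}h_{m,n}x^my^n$, where $a,b>0$ are linearly independent over $\mathbb{Q}$. Then there is a $C^\infty$ function $\tilde z$ such that $\tilde z_x^2+\tilde z_y^2-h$ vanishes to infinite order at $(0,0)$. *)

(* Defs.v *)
From Stdlib Require Import Reals QArith List.
From Coquelicot Require Import Coquelicot.
Open Scope R_scope.

Inductive dir := DX | DY.

(* First-order partial derivative (Coquelicot's total Derive). *)
Definition pd (d : dir) (f : R -> R -> R) : R -> R -> R :=
  match d with
  | DX => fun x y => Derive (fun t => f t y) x
  | DY => fun x y => Derive (fun t => f x t) y
  end.

Definition ex_pd (d : dir) (f : R -> R -> R) (x y : R) : Prop :=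
  match d with
  | DX => ex_derive (fun t => f t y) x
  | DY => ex_derive (fun t => f x t) y
  end.

(* Iterated partial derivative along a word w = [d1; ...; dk]:
   pdw w f = pd d1 (pd d2 (... (pd dk f))). The empty word gives f. *)
Definition pdw (w : list dir) (f : R -> R -> R) : R -> R -> R :=
  fold_right pd f w.

Definition in_disk (r x y : R) : Prop := x * x + y * y < r * r.

Definition smooth_on_disk (r : R) (f : R -> R -> R) : Prop :=
  forall (w : list dir) (x y : R), in_disk r x y ->
    ex_pd DX (pdw w f) x y /\ ex_pd DY (pdw w f) x y /\
    continuous (fun p : R * R => pdw w f (fst p) (snd p)) (x, y).

Definition vanishes_inf_order_at0 (g : R -> R -> R) : Prop :=
  forall w : list dir, pdw w g 0 0 = 0.

Definition Q_lin_indep (a b : R) : Prop :=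
  forall p q : Q, Q2R p * a + Q2R q * b = 0 -> Q2R p = 0 /\ Q2R q = 0.

(* Main.v *)
Require Import Defs.
From Stdlib Require Import Reals QArith List Lra Lia FunctionalExtensionality Factorial IndefiniteDescription.
From Coquelicot Require Import Coquelicot.
Open Scope R_scope.


Lemma loc_R x (P : R -> Prop) (d : posreal) :
  (forall t, Rabs (t - x) < d -> P t) -> locally x P.
Proof. intros H. exists d. intros t Ht. apply H. exact Ht. Qed.

Lemma sq_abs u : u * u = Rabs u * Rabs u.
Proof. destruct (Rcase_abs u); [rewrite Rabs_left by lra|rewrite Rabs_right by lra]; ring. Qed.

Lemma disk_open r x y : in_disk r x y -> locally_2d (fun u v => in_disk r u v) x y.
Proof.
  unfold in_disk; intros H.
  set (e := r*r - (x*x+y*y)).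
  assert (He : 0 < e) by (unfold e; lra).
  pose proof (Rabs_pos x); pose proof (Rabs_pos y).
  set (K := 2*Rabs x + 2*Rabs y + 3).
  assert (HK: 0 < K) by (unfold K; lra).
  set (d := Rmin 1 (e / K)).
  assert (Hd: 0 < d) by (apply Rmin_pos; [lra| apply Rdiv_lt_0_compat; lra]).
  exists (mkposreal d Hd); simpl; intros u v Hu Hv.
  assert (d <= 1) by apply Rmin_l.
  assert (d <= e / K) by apply Rmin_r.
  assert (d * K <= e).
  { apply Rmult_le_reg_r with (/K). apply Rinv_0_lt_compat; lra.
    rewrite Rmult_assoc, Rinv_r by lra. lra. }
  assert (Rabs u <= Rabs x + d).
  { replace u with (x + (u - x)) by ring. eapply Rle_trans. apply Rabs_triang. lra. }
  assert (Rabs v <= Rabs y + d).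
  { replace v with (y + (v - y)) by ring. eapply Rle_trans. apply Rabs_triang. lra. }
  pose proof (Rabs_pos u); pose proof (Rabs_pos v).
  rewrite (sq_abs u), (sq_abs v).
  pose proof (sq_abs x); pose proof (sq_abs y).
  unfold K, e in *. nra.
Qed.

Lemma cont_iff F x y :
  continuous (fun p : R * R => F (fst p) (snd p)) (x, y) <-> continuity_2d_pt F x y.
Proof. symmetry. apply continuity_2d_pt_filterlim. Qed.

Lemma loc2_impl (P Q : R -> R -> Prop) x y :
  locally_2d P x y -> (forall u v, P u v -> Q u v) -> locally_2d Q x y.
Proof. intros [d Hd] H. exists d. intros. apply H, Hd; auto. Qed.

Lemma loc2_and (P Q : R -> R -> Prop) x y :
  locally_2d P x y -> locally_2d Q x y -> locally_2d (fun u v => P u v /\ Q u v) x y.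
Proof.
  intros [d1 H1] [d2 H2].
  assert (0 < Rmin d1 d2) by (apply Rmin_pos; apply cond_pos).
  exists (mkposreal _ H). simpl; intros u v Hu Hv.
  pose proof (Rmin_l d1 d2); pose proof (Rmin_r d1 d2).
  split; [apply H1|apply H2]; lra.
Qed.

Lemma pd_ext_loc d F G x y :
  locally_2d (fun u v => F u v = G u v) x y ->
  pd d F x y = pd d G x y /\ (ex_pd d F x y -> ex_pd d G x y).
Proof.
  intros [e He].
  assert (L : locally (match d with DX => x | DY => y end)
     (fun t => match d with DX => F t y = G t y | DY => F x t = G x t end)).
  { apply loc_R with e. intros t Ht. destruct d; apply He; auto;
    rewrite Rminus_eq_0, Rabs_R0; apply cond_pos. }
  destruct d; simpl; split.
  - apply Derive_ext_loc; exact L.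
  - apply ex_derive_ext_loc; exact L.
  - apply Derive_ext_loc; exact L.
  - apply ex_derive_ext_loc; exact L.
Qed.

Lemma pdw_ext_disk r f g :
  (forall x y, in_disk r x y -> f x y = g x y) ->
  forall w x y, in_disk r x y -> pdw w f x y = pdw w g x y.
Proof.
  intros H w; induction w as [|d w IH]; simpl; intros x y Hxy; auto.
  apply pd_ext_loc. eapply loc2_impl. apply disk_open, Hxy. intros; auto.
Qed.

Lemma pdw_app u v f : pdw (u ++ v) f = pdw u (pdw v f).
Proof. unfold pdw. apply fold_right_app. Qed.

Lemma smooth_ext r f g :
  (forall x y, in_disk r x y -> f x y = g x y) ->
  smooth_on_disk r f -> smooth_on_disk r g.
Proof.
  intros H Hf w x y Hxy.
  assert (L : locally_2d (fun u v => pdw w f u v = pdw w g u v) x y).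
  { eapply loc2_impl. apply disk_open, Hxy. intros; apply (pdw_ext_disk r); auto. }
  destruct (Hf w x y Hxy) as (H1 & H2 & H3).
  split; [|split].
  - apply (proj2 (pd_ext_loc DX _ _ x y L)); auto.
  - apply (proj2 (pd_ext_loc DY _ _ x y L)); auto.
  - apply cont_iff. apply cont_iff in H3.
    eapply continuity_2d_pt_ext_loc; [exact L| exact H3].
Qed.

Lemma pd_plus_at d A B x y :
  ex_pd d A x y -> ex_pd d B x y ->
  pd d (fun x y => A x y + B x y) x y = pd d A x y + pd d B x y /\
  ex_pd d (fun x y => A x y + B x y) x y.
Proof.
  destruct d; simpl; intros; split;
  first [apply (Derive_plus (fun t => A t y) (fun t => B t y))
        |apply (Derive_plus (fun t => A x t) (fun t => B x t))
        |apply (ex_derive_plus (fun t => A t y) (fun t => B t y))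
        |apply (ex_derive_plus (fun t => A x t) (fun t => B x t))]; auto.
Qed.

Lemma pd_mult_at d A B x y :
  ex_pd d A x y -> ex_pd d B x y ->
  pd d (fun x y => A x y * B x y) x y = pd d A x y * B x y + A x y * pd d B x y /\
  ex_pd d (fun x y => A x y * B x y) x y.
Proof.
  destruct d; simpl; intros; split;
  first [apply (Derive_mult (fun t => A t y) (fun t => B t y))
        |apply (Derive_mult (fun t => A x t) (fun t => B x t))
        |apply (ex_derive_mult (fun t => A t y) (fun t => B t y))
        |apply (ex_derive_mult (fun t => A x t) (fun t => B x t))]; auto.
Qed.

Lemma pd_scal d c A : pd d (fun x y => c * A x y) = fun x y => c * pd d A x y.
Proof.
  apply functional_extensionality; intro x; apply functional_extensionality; intro y.
  destruct d; simpl; apply Derive_scal.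
Qed.

Lemma ex_pd_scal d c A x y : ex_pd d A x y -> ex_pd d (fun x y => c * A x y) x y.
Proof. destruct d; simpl; intros; apply ex_derive_scal; auto. Qed.

Lemma pdw_scal c A w : pdw w (fun x y => c * A x y) = fun x y => c * pdw w A x y.
Proof. induction w as [|d w IH]; simpl; auto. rewrite IH. apply pd_scal. Qed.


Lemma sm_ex r f d w x y : smooth_on_disk r f -> in_disk r x y -> ex_pd d (pdw w f) x y.
Proof. intros H Hxy; destruct (H w x y Hxy) as (?&?&?); destruct d; auto. Qed.
Lemma sm_cont r f w x y : smooth_on_disk r f -> in_disk r x y -> continuity_2d_pt (pdw w f) x y.
Proof. intros H Hxy; destruct (H w x y Hxy) as (?&?&?); apply cont_iff; auto. Qed.

Lemma smooth_pd r f d : smooth_on_disk r f -> smooth_on_disk r (pd d f).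
Proof.
  intros H w x y Hxy. 
  assert (E : pdw w (pd d f) = pdw (w ++ d :: nil) f) by (rewrite pdw_app; reflexivity).
  rewrite E. apply H; auto.
Qed.

Lemma smooth_pdw r f w : smooth_on_disk r f -> smooth_on_disk r (pdw w f).
Proof.
  intros H w' x y Hxy. rewrite <- pdw_app. apply H; auto.
Qed.

Lemma pdw_plus r f g : smooth_on_disk r f -> smooth_on_disk r g ->
  forall w x y, in_disk r x y ->
  pdw w (fun x y => f x y + g x y) x y = pdw w f x y + pdw w g x y.
Proof.
  intros Hf Hg w; induction w as [|d w IH]; simpl; intros x y Hxy; auto.
  assert (LOC : locally_2d (fun u v => pdw w (fun x y => f x y + g x y) u v =
     (fun x y => pdw w f x y + pdw w g x y) u v) x y).
  { eapply loc2_impl. apply disk_open, Hxy. intros; auto. }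
  rewrite (proj1 (pd_ext_loc d _ _ x y LOC)).
  apply pd_plus_at; [apply (sm_ex r)|apply (sm_ex r)]; auto.
Qed.

Lemma smooth_plus r f g : smooth_on_disk r f -> smooth_on_disk r g ->
  smooth_on_disk r (fun x y => f x y + g x y).
Proof.
  intros Hf Hg w x y Hxy.
  assert (L : locally_2d (fun u v => pdw w f u v + pdw w g u v =
                                     pdw w (fun x y => f x y + g x y) u v) x y).
  { eapply loc2_impl. apply disk_open, Hxy. intros; symmetry; apply (pdw_plus r); auto. }
  destruct (Hf w x y Hxy) as (A1 & A2 & A3).
  destruct (Hg w x y Hxy) as (B1 & B2 & B3).
  split; [|split].
  - apply (proj2 (pd_ext_loc DX _ _ x y L)). apply pd_plus_at; auto.
  - apply (proj2 (pd_ext_loc DY _ _ x y L)). apply pd_plus_at; auto.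
  - apply cont_iff. apply cont_iff in A3. apply cont_iff in B3.
    eapply continuity_2d_pt_ext_loc; [exact L|].
    apply continuity_2d_pt_plus; auto.
Qed.

Lemma smooth_scal r c f : smooth_on_disk r f -> smooth_on_disk r (fun x y => c * f x y).
Proof.
  intros Hf w x y Hxy. rewrite pdw_scal.
  destruct (Hf w x y Hxy) as (A1 & A2 & A3).
  split; [|split]; try (apply ex_pd_scal; auto).
  apply (proj2 (cont_iff (fun x y => c * pdw w f x y) x y)). apply cont_iff in A3.
  apply continuity_2d_pt_mult; auto. apply continuity_2d_pt_const.
Qed.

Lemma smooth_const r c : smooth_on_disk r (fun _ _ => c).
Proof.
  assert (H : forall w, w <> nil -> pdw w (fun _ _ => c) = fun _ _ => 0).
  { induction w as [|d w IH]; intros Hw; [congruence|].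
    destruct w as [|d' w].
    - simpl. apply functional_extensionality; intro x; apply functional_extensionality; intro y.
      destruct d; simpl; apply Derive_const.
    - change (pdw (d :: d' :: w) (fun _ _ => c)) with (pd d (pdw (d' :: w) (fun _ _ => c))).
      rewrite IH by congruence.
      apply functional_extensionality; intro x; apply functional_extensionality; intro y.
      destruct d; simpl; apply Derive_const. }
  intros w x y _. destruct w as [|d w].
  - simpl. split; [|split]; simpl; first [apply ex_derive_const | apply continuous_const].
  - rewrite H by congruence. split; [|split]; simpl; first [apply ex_derive_const | apply continuous_const].
Qed.

Lemma smooth_minus r f g : smooth_on_disk r f -> smooth_on_disk r g ->
  smooth_on_disk r (fun x y => f x y - g x y).
Proof.
  intros Hf Hg.
  apply smooth_ext with (fun x y => f x y + (-1) * g x y).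
  - intros; ring.
  - apply smooth_plus; auto. apply smooth_scal; auto.
Qed.

Lemma pdw_minus r f g : smooth_on_disk r f -> smooth_on_disk r g ->
  forall w x y, in_disk r x y ->
  pdw w (fun x y => f x y - g x y) x y = pdw w f x y - pdw w g x y.
Proof.
  intros Hf Hg w x y Hxy.
  assert (E : (fun x y => f x y - g x y) = (fun x y => f x y + (-1) * g x y)).
  { apply functional_extensionality; intro; apply functional_extensionality; intro; ring. }
  rewrite E, (pdw_plus r); auto. rewrite pdw_scal. ring.
  apply smooth_scal; auto.
Qed.

Fixpoint sp (L : list (list dir * list dir)) (f g : R -> R -> R) (x y : R) : R :=
  match L with
  | nil => 0
  | p :: L => pdw (fst p) f x y * pdw (snd p) g x y + sp L f g x y
  end.

Definition spstep (d : dir) (L : list (list dir * list dir)) :=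
  flat_map (fun p => (d :: fst p, snd p) :: (fst p, d :: snd p) :: nil) L.

Lemma pd_sp d L f g x y :
  (forall p, In p L -> ex_pd d (pdw (fst p) f) x y /\ ex_pd d (pdw (snd p) g) x y) ->
  pd d (sp L f g) x y = sp (spstep d L) f g x y /\ ex_pd d (sp L f g) x y.
Proof.
  induction L as [|p L IH]; intros H.
  - simpl. change (sp nil f g) with (fun _ _ : R => 0).
    destruct d; simpl; split; try apply Derive_const; apply ex_derive_const.
  - destruct (H p (or_introl eq_refl)) as [H1 H2].
    destruct IH as [IH1 IH2]. { intros; apply H; right; auto. }
    change (sp (p :: L) f g) with
      (fun x y => (fun x y => pdw (fst p) f x y * pdw (snd p) g x y) x y + sp L f g x y).
    destruct (pd_mult_at d (pdw (fst p) f) (pdw (snd p) g) x y H1 H2) as [M1 M2].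
    destruct (pd_plus_at d (fun x y => pdw (fst p) f x y * pdw (snd p) g x y) (sp L f g) x y M2 IH2)
      as [P1 P2].
    split; auto. rewrite P1, M1, IH1. simpl. ring.
Qed.

Lemma sp_cont L f g x y :
  (forall p, In p L -> continuity_2d_pt (pdw (fst p) f) x y /\ continuity_2d_pt (pdw (snd p) g) x y) ->
  continuity_2d_pt (sp L f g) x y.
Proof.
  induction L as [|p L IH]; intros H; simpl.
  - apply continuity_2d_pt_const.
  - apply continuity_2d_pt_plus; [apply continuity_2d_pt_mult|apply IH].
    all: try (apply H; left; auto). intros; apply H; right; auto.
Qed.

Lemma leib r f g : smooth_on_disk r f -> smooth_on_disk r g ->
  forall w, exists L,
    List.Forall (fun p => (length (fst p) + length (snd p) = length w)%nat) L /\
    forall x y, in_disk r x y -> pdw w (fun x y => f x y * g x y) x y = sp L f g x y.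
Proof.
  intros Hf Hg w; induction w as [|d w IH].
  - exists ((nil, nil) :: nil). split. repeat constructor. intros; simpl; ring.
  - destruct IH as [L [HL IH]]. exists (spstep d L). split.
    + unfold spstep. apply List.Forall_flat_map. eapply List.Forall_impl; [|exact HL].
      intros p Hp. simpl in *. repeat constructor; simpl; lia.
    + intros x y Hxy. simpl.
      assert (LOC : locally_2d (fun u v => pdw w (fun x y => f x y * g x y) u v =
         sp L f g u v) x y).
      { eapply loc2_impl. apply disk_open, Hxy. intros; auto. }
      rewrite (proj1 (pd_ext_loc d _ _ x y LOC)).
      apply pd_sp. intros p _. split; apply (sm_ex r); auto.
Qed.

Lemma smooth_mult r f g : smooth_on_disk r f -> smooth_on_disk r g ->
  smooth_on_disk r (fun x y => f x y * g x y).
Proof.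
  intros Hf Hg w x y Hxy.
  destruct (leib r f g Hf Hg w) as [L [_ HL]].
  assert (L2 : locally_2d (fun u v => sp L f g u v = pdw w (fun x y => f x y * g x y) u v) x y).
  { eapply loc2_impl. apply disk_open, Hxy. intros; symmetry; auto. }
  split; [|split].
  - apply (proj2 (pd_ext_loc DX _ _ x y L2)). apply pd_sp.
    intros p _. split; apply (sm_ex r); auto.
  - apply (proj2 (pd_ext_loc DY _ _ x y L2)). apply pd_sp.
    intros p _. split; apply (sm_ex r); auto.
  - apply cont_iff. eapply continuity_2d_pt_ext_loc; [exact L2|].
    apply sp_cont. intros p _. split; apply (sm_cont r); auto.
Qed.

Definition V (k : nat) (f : R -> R -> R) := forall w, (length w < k)%nat -> pdw w f 0 0 = 0.

Lemma V_mono k l f : (l <= k)%nat -> V k f -> V l f.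
Proof. intros H Hf w Hw. apply Hf. lia. Qed.

Lemma V_0 f : V 0 f.
Proof. intros w Hw. lia. Qed.

Lemma in_disk0 r : 0 < r -> in_disk r 0 0.
Proof. unfold in_disk; intros; nra. Qed.

Lemma V_plus r k f g : 0 < r -> smooth_on_disk r f -> smooth_on_disk r g ->
  V k f -> V k g -> V k (fun x y => f x y + g x y).
Proof.
  intros Hr Hf Hg Vf Vg w Hw. rewrite (pdw_plus r); auto. rewrite Vf, Vg; auto; ring.
  apply in_disk0; auto.
Qed.

Lemma V_minus r k f g : 0 < r -> smooth_on_disk r f -> smooth_on_disk r g ->
  V k f -> V k g -> V k (fun x y => f x y - g x y).
Proof.
  intros Hr Hf Hg Vf Vg w Hw. rewrite (pdw_minus r); auto. rewrite Vf, Vg; auto; ring.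
  apply in_disk0; auto.
Qed.

Lemma V_scal k c f : V k f -> V k (fun x y => c * f x y).
Proof. intros Vf w Hw. rewrite pdw_scal, Vf; auto; ring. Qed.

Lemma V_pd k d f : V (S k) f -> V k (pd d f).
Proof.
  intros Vf w Hw.
  assert (E : pdw w (pd d f) = pdw (w ++ d :: nil) f) by (rewrite pdw_app; reflexivity).
  rewrite E. apply Vf. rewrite app_length; simpl; lia.
Qed.

Lemma V_mult r k l f g : 0 < r -> smooth_on_disk r f -> smooth_on_disk r g ->
  V k f -> V l g -> V (k + l) (fun x y => f x y * g x y).
Proof.
  intros Hr Hf Hg Vf Vg w Hw.
  destruct (leib r f g Hf Hg w) as [L [HL E]].
  rewrite E by (apply in_disk0; auto).
  clear E. induction L as [|p L IH]; simpl; auto.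
  inversion HL; subst.
  rewrite IH; auto.
  destruct (Nat.lt_ge_cases (length (fst p)) k).
  - rewrite Vf; auto; ring.
  - rewrite Vg; [ring|lia].
Qed.


Lemma swap_at r f x y : smooth_on_disk r f -> in_disk r x y ->
  pdw (DY :: DX :: nil) f x y = pdw (DX :: DY :: nil) f x y.
Proof.
  intros Hf Hxy. symmetry.
  change (Derive (fun z => Derive (fun t => f z t) y) x =
          Derive (fun z => Derive (fun t => f t z) x) y).
  apply Schwarz.
  - eapply loc2_impl. apply disk_open, Hxy. intros u v Huv.
    pose proof (sm_ex r f DX nil u v Hf Huv).
    pose proof (sm_ex r f DY nil u v Hf Huv).
    pose proof (sm_ex r f DX (DY :: nil) u v Hf Huv).
    pose proof (sm_ex r f DY (DX :: nil) u v Hf Huv).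
    simpl in *. tauto.
  - exact (sm_cont r f (DX :: DY :: nil) x y Hf Hxy).
  - exact (sm_cont r f (DY :: DX :: nil) x y Hf Hxy).
Qed.

Lemma swap_word r f u v x y : smooth_on_disk r f -> in_disk r x y ->
  pdw (u ++ DY :: DX :: v) f x y = pdw (u ++ DX :: DY :: v) f x y.
Proof.
  intros Hf Hxy. rewrite !pdw_app.
  apply (pdw_ext_disk r); auto. intros x' y' H'.
  change (pdw (DY :: DX :: nil) (pdw v f) x' y' = pdw (DX :: DY :: nil) (pdw v f) x' y').
  apply (swap_at r); auto. apply smooth_pdw; auto.
Qed.

Lemma move_Y r f n : smooth_on_disk r f -> forall u v x y, in_disk r x y ->
  pdw (u ++ DY :: repeat DX n ++ v) f x y = pdw (u ++ repeat DX n ++ DY :: v) f x y.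
Proof.
  intros Hf; induction n as [|n IH]; intros u v x y Hxy; simpl; auto.
  rewrite (swap_word r) by auto.
  replace (u ++ DX :: DY :: repeat DX n ++ v) with ((u ++ DX :: nil) ++ DY :: repeat DX n ++ v)
    by (rewrite <- app_assoc; reflexivity).
  rewrite IH by auto. rewrite <- app_assoc. reflexivity.
Qed.

Fixpoint cx (w : list dir) : nat :=
  match w with nil => 0 | DX :: w => S (cx w) | DY :: w => cx w end.
Fixpoint cy (w : list dir) : nat :=
  match w with nil => 0 | DX :: w => cy w | DY :: w => S (cy w) end.

Lemma cxy_len w : (cx w + cy w = length w)%nat.
Proof. induction w as [|[] w IH]; simpl; lia. Qed.

Definition nrm w := repeat DX (cx w) ++ repeat DY (cy w).

Lemma pdw_nrm r f : smooth_on_disk r f -> forall w x y, in_disk r x y ->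
  pdw w f x y = pdw (nrm w) f x y.
Proof.
  intros Hf w; induction w as [|d w IH]; intros x y Hxy; simpl; auto.
  assert (LOC : locally_2d (fun u v => pdw w f u v = pdw (nrm w) f u v) x y).
  { eapply loc2_impl. apply disk_open, Hxy. intros; auto. }
  rewrite (proj1 (pd_ext_loc d _ _ x y LOC)).
  change (pd d (pdw (nrm w) f) x y) with (pdw (d :: nrm w) f x y).
  destruct d; unfold nrm; simpl; auto.
  apply (move_Y r f (cx w) Hf nil); auto.
Qed.

Definition J (f : R -> R -> R) (i j : nat) := pdw (repeat DX i ++ repeat DY j) f 0 0.

Lemma sym0 r f w : 0 < r -> smooth_on_disk r f -> pdw w f 0 0 = J f (cx w) (cy w).
Proof. intros Hr Hf. apply (pdw_nrm r); auto. apply in_disk0; auto. Qed.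

Lemma cx_nrm i j : cx (repeat DX i ++ repeat DY j) = i.
Proof. induction i; simpl; auto. induction j; simpl; auto. Qed.
Lemma cy_nrm i j : cy (repeat DX i ++ repeat DY j) = j.
Proof. induction i; simpl; auto. induction j; simpl; auto. Qed.

Definition sep (f g : R -> R) : R -> R -> R := fun x y => f x * g y.

Lemma pdw_sep f g w : pdw w (sep f g) = sep (Derive_n f (cx w)) (Derive_n g (cy w)).
Proof.
  induction w as [|d w IH]; simpl; auto. rewrite IH.
  apply functional_extensionality; intro x; apply functional_extensionality; intro y.
  unfold sep; destruct d; simpl.
  - rewrite (Derive_ext (fun t => Derive_n f (cx w) t * Derive_n g (cy w) y)
             (fun t => Derive_n g (cy w) y * Derive_n f (cx w) t)) by (intros; ring).
    rewrite Derive_scal. ring.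
  - apply Derive_scal.
Qed.

Definition Sm1 (f : R -> R) := forall n x, ex_derive (Derive_n f n) x.

Lemma Sm1_cont f k x : Sm1 f -> continuity_pt (Derive_n f k) x.
Proof. intros H. apply continuity_pt_filterlim. apply (ex_derive_continuous (Derive_n f k)). apply H. Qed.

Lemma smooth_sep f g r : Sm1 f -> Sm1 g -> smooth_on_disk r (sep f g).
Proof.
  intros Hf Hg w x y _. rewrite pdw_sep. unfold sep. split; [|split]; simpl.
  - apply ex_derive_mult; [apply Hf|apply ex_derive_const].
  - apply ex_derive_mult; [apply ex_derive_const|apply Hg].
  - apply (proj2 (cont_iff (fun x y => Derive_n f (cx w) x * Derive_n g (cy w) y) x y)).
    apply continuity_2d_pt_mult.
    + apply (continuity_1d_2d_pt_comp (Derive_n f (cx w)) (fun u _ => u)).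
      apply Sm1_cont; auto. apply continuity_2d_pt_id1.
    + apply (continuity_1d_2d_pt_comp (Derive_n g (cy w)) (fun _ v => v)).
      apply Sm1_cont; auto. apply continuity_2d_pt_id2.
Qed.

Lemma Derive_n_S f n : Derive_n f (S n) = Derive_n (Derive f) n.
Proof.
  apply functional_extensionality; intro x.
  replace (S n) with (n + 1)%nat by lia. rewrite <- Derive_n_comp. reflexivity.
Qed.

Lemma Sm1_const c : Sm1 (fun _ => c).
Proof. intros [|n] x. apply ex_derive_const.
  apply ex_derive_ext with (fun _ => 0). intros; symmetry; apply (Derive_n_const n c).
  apply ex_derive_const. Qed.

Lemma Derive_pow_fun m : Derive (fun x => x ^ S m) = fun x => INR (S m) * x ^ m.
Proof.
  apply functional_extensionality; intro x.
  rewrite (Derive_pow (fun t => t)) by apply ex_derive_id.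
  assert (E : Derive (fun t => t) x = 1) by (apply is_derive_unique; auto_derive; reflexivity).
  rewrite E. simpl pred. ring.
Qed.

Lemma Dn_scal c f n : Derive_n (fun x => c * f x) n = fun x => c * Derive_n f n x.
Proof. apply functional_extensionality; intro x; apply Derive_n_scal_l. Qed.

Lemma Sm1_scal c f : Sm1 f -> Sm1 (fun x => c * f x).
Proof. intros H n x. rewrite Dn_scal. apply ex_derive_scal, H. Qed.

Lemma Sm1_pow m : Sm1 (fun x => x ^ m).
Proof.
  induction m as [|m IH].
  { assert (E: (fun x:R => x^0) = (fun _ => 1)) by (apply functional_extensionality; intros; reflexivity).
    rewrite E. apply Sm1_const. }
  intros [|k] x. change (ex_derive (fun x => x ^ S m) x). apply ex_derive_pow, ex_derive_id.
  rewrite Derive_n_S, Derive_pow_fun. apply Sm1_scal; auto.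
Qed.

Lemma Dn_pow0 m k : Derive_n (fun x => x ^ m) k 0 = if Nat.eqb k m then INR (fact m) else 0.
Proof.
  revert k; induction m as [|m IH]; intros [|k].
  - change (0 ^ 0 = INR 1). reflexivity.
  - change (Derive_n (fun _ => 1) (S k) 0 = 0). apply (Derive_n_const k 1).
  - change (0 ^ S m = 0). rewrite pow_i by lia. reflexivity.
  - rewrite Derive_n_S, Derive_pow_fun, Dn_scal, IH. simpl Nat.eqb.
    destruct (Nat.eqb k m); [|ring]. rewrite fact_simpl, mult_INR. ring.
Qed.

Lemma Sm1_smooth_sep1 f r : Sm1 f -> smooth_on_disk r (fun x y => f x).
Proof.
  intros H. apply smooth_ext with (sep f (fun _ => 1)). intros; unfold sep; ring.
  apply smooth_sep; auto. apply Sm1_const.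
Qed.


Definition Sm f := forall r, smooth_on_disk r f.

Lemma in_disk_big x y : in_disk (Rabs x + Rabs y + 1) x y.
Proof.
  unfold in_disk. pose proof (sq_abs x); pose proof (sq_abs y).
  pose proof (Rabs_pos x); pose proof (Rabs_pos y). nra.
Qed.

Lemma Sm_plus f g : Sm f -> Sm g -> Sm (fun x y => f x y + g x y).
Proof. intros ? ? r; apply smooth_plus; auto. Qed.
Lemma Sm_minus f g : Sm f -> Sm g -> Sm (fun x y => f x y - g x y).
Proof. intros ? ? r; apply smooth_minus; auto. Qed.
Lemma Sm_mult f g : Sm f -> Sm g -> Sm (fun x y => f x y * g x y).
Proof. intros ? ? r; apply smooth_mult; auto. Qed.
Lemma Sm_scal c f : Sm f -> Sm (fun x y => c * f x y).
Proof. intros ? r; apply smooth_scal; auto. Qed.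
Lemma Sm_pd d f : Sm f -> Sm (pd d f).
Proof. intros ? r; apply smooth_pd; auto. Qed.
Lemma Sm_ext f g : (forall x y, f x y = g x y) -> Sm f -> Sm g.
Proof. intros E H r; apply smooth_ext with f; auto. Qed.
Lemma Sm_sep f g : Sm1 f -> Sm1 g -> Sm (sep f g).
Proof. intros ? ? r; apply smooth_sep; auto. Qed.

Lemma Sm_ex f d w x y : Sm f -> ex_pd d (pdw w f) x y.
Proof. intros H; apply (sm_ex _ f d w x y (H _) (in_disk_big x y)). Qed.

Lemma pdw_plus_g f g w : Sm f -> Sm g ->
  pdw w (fun x y => f x y + g x y) = fun x y => pdw w f x y + pdw w g x y.
Proof.
  intros Hf Hg. apply functional_extensionality; intro x; apply functional_extensionality; intro y.
  apply (pdw_plus _ f g (Hf _) (Hg _) w x y (in_disk_big x y)).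
Qed.

Lemma pd_plus_g d f g : Sm f -> Sm g ->
  pd d (fun x y => f x y + g x y) = fun x y => pd d f x y + pd d g x y.
Proof. intros; apply (pdw_plus_g f g (d :: nil)); auto. Qed.

Lemma pd_minus_g d f g : Sm f -> Sm g ->
  pd d (fun x y => f x y - g x y) = fun x y => pd d f x y - pd d g x y.
Proof.
  intros Hf Hg. apply functional_extensionality; intro x; apply functional_extensionality; intro y.
  apply (pdw_minus _ f g (Hf _) (Hg _) (d :: nil) x y (in_disk_big x y)).
Qed.

Lemma smooth_sum r (F : nat -> R -> R -> R) n : (forall i, smooth_on_disk r (F i)) ->
  smooth_on_disk r (fun x y => sum_f_R0 (fun i => F i x y) n).
Proof.
  intros H; induction n as [|n IH]; simpl. apply H.
  apply smooth_plus; auto.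
Qed.

Lemma pdw_sum r (F : nat -> R -> R -> R) n : (forall i, smooth_on_disk r (F i)) ->
  forall w x y, in_disk r x y ->
  pdw w (fun x y => sum_f_R0 (fun i => F i x y) n) x y = sum_f_R0 (fun i => pdw w (F i) x y) n.
Proof.
  intros H; induction n as [|n IH]; intros w x y Hxy; simpl. reflexivity.
  rewrite (pdw_plus r); auto. rewrite IH; auto. apply smooth_sum; auto.
Qed.

Lemma Sm_sum (F : nat -> R -> R -> R) n : (forall i, Sm (F i)) ->
  Sm (fun x y => sum_f_R0 (fun i => F i x y) n).
Proof. intros H r; apply smooth_sum; intros; apply H. Qed.

Lemma pdw_sum_g (F : nat -> R -> R -> R) n w : (forall i, Sm (F i)) ->
  pdw w (fun x y => sum_f_R0 (fun i => F i x y) n) = fun x y => sum_f_R0 (fun i => pdw w (F i) x y) n.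
Proof.
  intros H. apply functional_extensionality; intro x; apply functional_extensionality; intro y.
  apply (pdw_sum _ F n (fun i => H i _) w x y (in_disk_big x y)).
Qed.

Lemma sum_delta (f : nat -> R) k n : (forall i, i <> k -> f i = 0) ->
  sum_f_R0 f n = if Nat.leb k n then f k else 0.
Proof.
  intros H; induction n as [|n IH].
  { simpl. destruct k as [|k]; simpl; [reflexivity|]. apply H; lia. }
  { simpl. rewrite IH. destruct (Nat.leb k n) eqn:E1; destruct (Nat.leb k (S n)) eqn:E2.
    + rewrite (H (S n)); [ring|]. apply Nat.leb_le in E1; lia.
    + apply Nat.leb_le in E1; apply Nat.leb_gt in E2; lia.
    + apply Nat.leb_gt in E1; apply Nat.leb_le in E2. assert (k = S n) by lia. subst; ring.
    + rewrite H; [ring|]. apply Nat.leb_gt in E2; lia. }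
Qed.

Definition mono i j := sep (fun x => x ^ i) (fun y => y ^ j).
Definition hp (n : nat) (c : nat -> R) : R -> R -> R :=
  fun x y => sum_f_R0 (fun i => c i * mono i (n - i) x y) n.

Lemma Sm_mono i j : Sm (mono i j).
Proof. apply Sm_sep; apply Sm1_pow. Qed.

Lemma Sm_hp n c : Sm (hp n c).
Proof. apply Sm_sum. intros i. apply Sm_scal, Sm_mono. Qed.

Lemma pdw_mono0 i j w : pdw w (mono i j) 0 0 =
  (if Nat.eqb (cx w) i then INR (fact i) else 0) * (if Nat.eqb (cy w) j then INR (fact j) else 0).
Proof. unfold mono. rewrite pdw_sep. unfold sep. rewrite !Dn_pow0. reflexivity. Qed.

Lemma pdw_hp0 n c w : pdw w (hp n c) 0 0 =
  if Nat.eqb (length w) n then c (cx w) * INR (fact (cx w)) * INR (fact (cy w)) else 0.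
Proof.
  unfold hp. rewrite pdw_sum_g by (intros; apply Sm_scal, Sm_mono).
  assert (E : (fun i => pdw w (fun x y => c i * mono i (n - i) x y) 0 0) =
              (fun i => c i * pdw w (mono i (n - i)) 0 0)).
  { apply functional_extensionality; intro i. rewrite pdw_scal. reflexivity. }
  cbv beta.
  rewrite E. clear E.
  pose proof (cxy_len w).
  rewrite (sum_delta _ (cx w)).
  - destruct (Nat.eqb (length w) n) eqn:En.
    + apply Nat.eqb_eq in En. replace (Nat.leb (cx w) n) with true by (symmetry; apply Nat.leb_le; lia).
      rewrite pdw_mono0, Nat.eqb_refl. replace (n - cx w)%nat with (cy w) by lia.
      rewrite Nat.eqb_refl. ring.
    + apply Nat.eqb_neq in En. destruct (Nat.leb (cx w) n) eqn:Hl; auto.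
      apply Nat.leb_le in Hl.
      rewrite pdw_mono0, Nat.eqb_refl.
      replace (Nat.eqb (cy w) (n - cx w)) with false by (symmetry; apply Nat.eqb_neq; lia). ring.
  - intros i Hi. rewrite pdw_mono0.
    replace (Nat.eqb (cx w) i) with false by (symmetry; apply Nat.eqb_neq; lia). ring.
Qed.

Lemma V_hp n c : V n (hp n c).
Proof.
  intros w Hw. rewrite pdw_hp0. replace (Nat.eqb (length w) n) with false; auto.
  symmetry; apply Nat.eqb_neq; lia.
Qed.

Lemma Derive_pow_mul i x : x * Derive (fun t => t ^ i) x = INR i * x ^ i.
Proof.
  destruct i as [|i].
  - change (fun t : R => t ^ 0) with (fun _ : R => 1). rewrite Derive_const. simpl; ring.
  - rewrite Derive_pow_fun. simpl. ring.
Qed.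

Lemma LQ_id a b n c x y :
  a * x * pd DX (hp n c) x y + b * y * pd DY (hp n c) x y =
  hp n (fun i => c i * (a * INR i + b * INR (n - i))) x y.
Proof.
  change (pd DX (hp n c)) with (pdw (DX :: nil) (hp n c)).
  change (pd DY (hp n c)) with (pdw (DY :: nil) (hp n c)).
  unfold hp. rewrite !pdw_sum_g by (intros; apply Sm_scal, Sm_mono).
  cbv beta. rewrite !scal_sum, <- plus_sum. apply sum_eq. intros i _.
  rewrite !pdw_scal. unfold mono. rewrite !pdw_sep. unfold sep. simpl.
  pose proof (Derive_pow_mul i x). pose proof (Derive_pow_mul (n - i) y).
  set (D1 := Derive (fun t : R => t ^ i) x) in *.
  set (D2 := Derive (fun t : R => t ^ (n - i)) y) in *.
  transitivity (c i * a * (x * D1) * y ^ (n - i) + c i * b * x ^ i * (y * D2)); [ring|].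
  rewrite H, H0. ring.
Qed.


Definition qf (a b : R) : R -> R -> R := fun x y => a / 2 * (x * x) + b / 2 * (y * y).

Lemma Sm_q a b : Sm (qf a b).
Proof.
  apply Sm_ext with (fun x y => a / 2 * mono 2 0 x y + b / 2 * mono 0 2 x y).
  - intros; unfold mono, sep, qf; simpl; ring.
  - apply Sm_plus; apply Sm_scal, Sm_mono.
Qed.

Lemma pd_qX a b x y : pd DX (qf a b) x y = a * x.
Proof. simpl. unfold qf. apply is_derive_unique. auto_derive; [exact I|field]. Qed.
Lemma pd_qY a b x y : pd DY (qf a b) x y = b * y.
Proof. simpl. unfold qf. apply is_derive_unique. auto_derive; [exact I|field]. Qed.

Definition Ef (h Z : R -> R -> R) : R -> R -> R :=
  fun x y => pd DX Z x y ^ 2 + pd DY Z x y ^ 2 - h x y.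

Definition cf h a b Z n i :=
  - J (Ef h Z) i (n - i) / (2 * INR (fact i) * INR (fact (n - i)) * (a * INR i + b * INR (n - i))).

Fixpoint Zs h a b (m : nat) : R -> R -> R :=
  match m with
  | O => qf a b
  | S m => fun x y => Zs h a b m x y + hp (m + 3) (cf h a b (Zs h a b m) (m + 3)) x y
  end.

Lemma Sm_smooth r f : Sm f -> smooth_on_disk r f.
Proof. auto. Qed.

Lemma smooth_E r h Z : Sm Z -> smooth_on_disk r h -> smooth_on_disk r (Ef h Z).
Proof.
  intros HZ Hh.
  apply smooth_ext with (fun x y => (pd DX Z x y * pd DX Z x y + pd DY Z x y * pd DY Z x y) - h x y).
  - intros; unfold Ef; ring.
  - apply smooth_minus; auto. apply Sm_plus; apply Sm_mult; apply Sm_pd; auto.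
Qed.

Lemma lin_pos a b i n : 0 < a -> 0 < b -> (0 < n)%nat -> 0 < a * INR i + b * INR (n - i).
Proof.
  intros Ha Hb Hn. pose proof (pos_INR i). pose proof (pos_INR (n - i)).
  destruct i as [|i].
  - rewrite Nat.sub_0_r. simpl. assert (0 < INR n) by (apply lt_0_INR; lia). nra.
  - assert (0 < INR (S i)) by (apply lt_0_INR; lia). nra.
Qed.

Lemma step h a b rh Z n : 0 < rh -> 0 < a -> 0 < b -> smooth_on_disk rh h -> Sm Z ->
  V 3 (fun x y => Z x y - qf a b x y) -> (3 <= n)%nat -> V n (Ef h Z) ->
  V (S n) (Ef h (fun x y => Z x y + hp n (cf h a b Z n) x y)).
Proof.
  intros Hrh Ha Hb Hh HZ VR Hn VE.
  set (c := cf h a b Z n).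
  set (Q := hp n c).
  set (R0 := fun x y => Z x y - qf a b x y).
  assert (SQ : Sm Q) by apply Sm_hp.
  assert (SR : Sm R0) by (apply Sm_minus; auto; apply Sm_q).
  assert (EQ : Ef h (fun x y => Z x y + Q x y) =
    fun x y => (Ef h Z x y + 2 * (a * x * pd DX Q x y + b * y * pd DY Q x y)) +
      (2 * (pd DX R0 x y * pd DX Q x y + pd DY R0 x y * pd DY Q x y) +
       (pd DX Q x y * pd DX Q x y + pd DY Q x y * pd DY Q x y))).
  { unfold Ef, R0. rewrite !pd_plus_g by auto. rewrite !pd_minus_g by (auto; apply Sm_q).
    apply functional_extensionality; intro x; apply functional_extensionality; intro y.
    rewrite pd_qX, pd_qY. ring. }
  change (V (S n) (Ef h (fun x y => Z x y + Q x y))). rewrite EQ.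
  assert (EL : (fun x y => a * x * pd DX Q x y + b * y * pd DY Q x y) =
               hp n (fun i => c i * (a * INR i + b * INR (n - i)))).
  { apply functional_extensionality; intro x; apply functional_extensionality; intro y.
    apply LQ_id. }
  assert (SE : smooth_on_disk rh (Ef h Z)) by (apply smooth_E; auto).
  destruct n as [|n']; [lia|].
  assert (VQx : V n' (pd DX Q)) by (apply V_pd; apply V_hp).
  assert (VQy : V n' (pd DY Q)) by (apply V_pd; apply V_hp).
  assert (VRx : V 2 (pd DX R0)) by (apply V_pd; exact VR).
  assert (VRy : V 2 (pd DY R0)) by (apply V_pd; exact VR).
  assert (SQx : Sm (pd DX Q)) by (apply Sm_pd; auto).
  assert (SQy : Sm (pd DY Q)) by (apply Sm_pd; auto).
  assert (SRx : Sm (pd DX R0)) by (apply Sm_pd; auto).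
  assert (SRy : Sm (pd DY R0)) by (apply Sm_pd; auto).
  assert (SL : Sm (fun x y => a * x * pd DX Q x y + b * y * pd DY Q x y)) by (rewrite EL; apply Sm_hp).
  apply (V_plus rh); auto.
  - apply smooth_plus; auto. apply Sm_scal; auto.
  - apply Sm_plus; [apply Sm_scal; apply Sm_plus|apply Sm_plus]; apply Sm_mult; auto.
  -
    intros w Hw.
    rewrite (pdw_plus rh) by (auto; try apply in_disk0; auto; apply Sm_scal; auto).
    rewrite pdw_scal. rewrite EL. rewrite pdw_hp0.
    destruct (Nat.eqb (length w) (S n')) eqn:Hl.
    + apply Nat.eqb_eq in Hl. rewrite (sym0 rh) by auto.
      pose proof (cxy_len w).
      unfold c, cf. replace (S n' - cx w)%nat with (cy w) by lia.
      pose proof (INR_fact_neq_0 (cx w)). pose proof (INR_fact_neq_0 (cy w)).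
      pose proof (lin_pos a b (cx w) (S n') Ha Hb ltac:(lia)).
      replace (S n' - cx w)%nat with (cy w) in H2 by lia.
      field. repeat split; lra.
    + apply Nat.eqb_neq in Hl. rewrite VE by lia. ring.
  - apply (V_plus 1); try lra.
    + apply Sm_scal; apply Sm_plus; apply Sm_mult; auto.
    + apply Sm_plus; apply Sm_mult; auto.
    + apply V_scal. apply (V_plus 1); try lra; try (apply Sm_mult; auto).
      * apply V_mono with (2 + n')%nat; [lia|]. apply (V_mult 1); auto; lra.
      * apply V_mono with (2 + n')%nat; [lia|]. apply (V_mult 1); auto; lra.
    + apply (V_plus 1); try lra; try (apply Sm_mult; auto).
      * apply V_mono with (n' + n')%nat; [lia|]. apply (V_mult 1); auto; lra.
      * apply V_mono with (n' + n')%nat; [lia|]. apply (V_mult 1); auto; lra.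
Qed.

Definition c0 (a b : R) (i : nat) : R :=
  match i with O => b ^ 2 | S O => 0 | S (S O) => a ^ 2 | _ => 0 end.

Lemma base h a b rh : 0 < rh -> smooth_on_disk rh h ->
  h 0 0 = 0 ->
  pdw (DX :: nil) h 0 0 = 0 ->
  pdw (DY :: nil) h 0 0 = 0 ->
  pdw (DX :: DX :: nil) h 0 0 = 2 * a ^ 2 ->
  pdw (DX :: DY :: nil) h 0 0 = 0 ->
  pdw (DY :: DY :: nil) h 0 0 = 2 * b ^ 2 ->
  V 3 (Ef h (qf a b)).
Proof.
  intros Hrh Hh H0 H1 H2 H3 H4 H5.
  assert (EQ : Ef h (qf a b) = fun x y => hp 2 (c0 a b) x y - h x y).
  { apply functional_extensionality; intro x; apply functional_extensionality; intro y.
    unfold Ef. rewrite pd_qX, pd_qY. unfold hp, mono, sep. simpl. ring. }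
  rewrite EQ. intros w Hw.
  rewrite (pdw_minus rh) by (auto; try apply in_disk0; auto; apply Sm_hp).
  rewrite pdw_hp0, (sym0 rh h) by auto.
  pose proof (cxy_len w) as Hc. rewrite <- Hc. rewrite <- Hc in Hw. clear Hc.
  revert Hw. generalize (cx w) (cy w). intros i j Hw.
  unfold J. simpl in H1, H2, H3, H4, H5.
  destruct i as [|[|[|i]]]; destruct j as [|[|[|j]]]; try lia; simpl; 
    try rewrite H0; try rewrite H1; try rewrite H2; try rewrite H3; try rewrite H4; try rewrite H5.
  all: lra.
Qed.

Lemma Zs_props h a b rh : 0 < rh -> 0 < a -> 0 < b -> smooth_on_disk rh h ->
  V 3 (Ef h (qf a b)) ->
  forall m, Sm (Zs h a b m) /\ V 3 (fun x y => Zs h a b m x y - qf a b x y) /\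
            V (m + 3) (Ef h (Zs h a b m)).
Proof.
  intros Hrh Ha Hb Hh VB m; induction m as [|m (IH1 & IH2 & IH3)].
  - split; [apply Sm_q|split; auto].
    assert (E : (fun x y => Zs h a b 0 x y - qf a b x y) = fun x y => 0 * qf a b x y).
    { apply functional_extensionality; intro x; apply functional_extensionality; intro y.
      simpl; ring. }
    rewrite E. intros w Hw. rewrite pdw_scal. ring.
  - simpl Zs. split; [|split].
    + apply Sm_plus; auto. apply Sm_hp.
    + assert (E : (fun x y => (Zs h a b m x y + hp (m + 3) (cf h a b (Zs h a b m) (m + 3)) x y) - qf a b x y)
                = fun x y => (Zs h a b m x y - qf a b x y) + hp (m + 3) (cf h a b (Zs h a b m) (m + 3)) x y).
      { apply functional_extensionality; intro x; apply functional_extensionality; intro y. ring. }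
      rewrite E. apply (V_plus 1); try lra.
      * apply Sm_minus; auto. apply Sm_q.
      * apply Sm_hp.
      * auto.
      * apply V_mono with (m + 3)%nat; [lia|]. apply V_hp.
    + replace (S m + 3)%nat with (S (m + 3)) by lia.
      apply (step h a b rh); auto. lia.
Qed.


Lemma fin_delta {P : Type} (Nb : R -> P -> Prop)
  (Hm : forall d1 d2 p, 0 < d1 <= d2 -> Nb d1 p -> Nb d2 p)
  (Q : nat -> P -> Prop) N :
  (forall n, (n < N)%nat -> exists d, 0 < d /\ forall p, Nb d p -> Q n p) ->
  exists d, 0 < d /\ forall p, Nb d p -> forall n, (n < N)%nat -> Q n p.
Proof.
  induction N as [|N IH]; intros H.
  - exists 1; split; [lra|]. intros; lia.
  - destruct IH as [d1 [Hd1 H1]]. { intros; apply H; lia. }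
    destruct (H N ltac:(lia)) as [d2 [Hd2 H2]].
    exists (Rmin d1 d2). split. apply Rmin_pos; auto.
    intros p Hp n Hn.
    pose proof (Rmin_l d1 d2); pose proof (Rmin_r d1 d2).
    assert (0 < Rmin d1 d2) by (apply Rmin_pos; auto).
    destruct (Nat.eq_dec n N).
    + subst. apply H2. apply Hm with (Rmin d1 d2); auto; lra.
    + apply H1; [|lia]. apply Hm with (Rmin d1 d2); auto; lra.
Qed.

Lemma tail_small (K : nat -> R) : ex_series K -> forall eps, 0 < eps ->
  exists N, Rabs (Series (fun k => K (S N + k)%nat)) < eps.
Proof.
  intros HK eps Heps.
  pose proof (Series_correct K HK) as HS. apply is_series_Reals in HS.
  destruct (HS eps Heps) as [N HN].
  exists N. rewrite (Series_incr_n K (S N)) in HN by (auto; lia).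
  specialize (HN N (le_n _)). unfold R_dist in HN. simpl pred in HN.
  rewrite Rabs_minus_sym in HN.
  replace (sum_f_R0 K N + Series (fun k => K (S N + k)%nat) - sum_f_R0 K N)
    with (Series (fun k => K (S N + k)%nat)) in HN by ring. auto.
Qed.

Lemma ex_series_bound (a K : nat -> R) : ex_series K -> (forall n, Rabs (a n) <= K n) -> ex_series a.
Proof. intros HK H. apply (@ex_series_le R_AbsRing R_CompleteNormedModule a K); auto. Qed.

Lemma series_lim {P : Type} (Nb : R -> P -> Prop)
  (Hm : forall d1 d2 p, 0 < d1 <= d2 -> Nb d1 p -> Nb d2 p)
  (G : P -> nat -> R) (K : nat -> R) :
  ex_series K -> (forall p n, Rabs (G p n) <= K n) ->
  (forall n eps, 0 < eps -> exists d, 0 < d /\ forall p, Nb d p -> Rabs (G p n) < eps) ->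
  forall eps, 0 < eps -> exists d, 0 < d /\ forall p, Nb d p -> Rabs (Series (G p)) < eps.
Proof.
  intros HK Hb Hl eps Heps.
  destruct (tail_small K HK (eps / 2)) as [N HN]; [lra|].
  assert (HSN : 0 < INR (S N)) by (apply lt_0_INR; lia).
  destruct (fin_delta Nb Hm (fun n p => Rabs (G p n) < eps / (2 * INR (S N))) (S N)) as [d [Hd Hd']].
  { intros n _. apply Hl. apply Rdiv_lt_0_compat; lra. }
  exists d. split; auto. intros p Hp.
  assert (exG : ex_series (G p)) by (apply ex_series_bound with K; auto).
  rewrite (Series_incr_n (G p) (S N)) by (auto; lia). simpl pred.
  assert (A1 : Rabs (sum_f_R0 (G p) N) <= INR (S N) * (eps / (2 * INR (S N)))).
  { eapply Rle_trans. apply sum_f_R0_triangle.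
    eapply Rle_trans. apply (sum_Rle _ (fun _ => eps / (2 * INR (S N)))).
    { intros k Hk. left. apply Hd'; auto; lia. }
    rewrite sum_cte. right; ring. }
  replace (INR (S N) * (eps / (2 * INR (S N)))) with (eps / 2) in A1 by (field; lra).
  assert (exK : ex_series (fun k => K (S N + k)%nat)) by (apply ex_series_incr_n; auto).
  assert (A2 : Rabs (Series (fun k => G p (S N + k)%nat)) <= Series (fun k => K (S N + k)%nat)).
  { eapply Rle_trans. apply Series_Rabs.
    apply ex_series_bound with (fun k => K (S N + k)%nat); auto.
    intros; rewrite Rabs_Rabsolu; auto.
    apply Series_le; auto. intros; split; [apply Rabs_pos| auto]. }
  pose proof (Rle_abs (Series (fun k => K (S N + k)%nat))).
  eapply Rle_lt_trans. apply Rabs_triang. lra.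
Qed.

Lemma series_derive (f f' : nat -> R -> R) (M : nat -> R) t :
  (forall n u, is_derive (f n) u (f' n u)) -> (forall n u, Rabs (f' n u) <= M n) ->
  ex_series M -> (forall u, ex_series (fun n => f n u)) ->
  is_derive (fun u => Series (fun n => f n u)) t (Series (fun n => f' n t)).
Proof.
  intros Hd Hb HM Hex. apply is_derive_Reals. intros eps Heps.
  set (G := fun h n => (f n (t + h) - f n t) / h - f' n t).
  assert (exf' : forall u, ex_series (fun n => f' n u)) by (intros; apply ex_series_bound with M; auto).
  assert (HK : ex_series (fun n => 2 * M n)).
  { apply ex_series_ext with (fun n => M n * 2);
      [intros; simpl; ring| apply ex_series_scal_r; auto]. }
  assert (Hb2 : forall h n, Rabs (G h n) <= 2 * M n).
  { intros h n. unfold G. pose proof (Hb n t) as Ht. pose proof (Rabs_pos (f' n t)).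
    destruct (Req_dec h 0) as [->|Hh].
    - replace ((f n (t + 0) - f n t) / 0 - f' n t) with (- f' n t)
        by (rewrite Rplus_0_r; unfold Rdiv; ring).
      rewrite Rabs_Ropp. lra.
    - destruct (MVT_gen (f n) t (t + h) (f' n)) as [c [_ Hc]].
      + intros; apply Hd.
      + intros; apply continuity_pt_filterlim. apply (ex_derive_continuous (f n)).
        eexists; apply Hd.
      + rewrite Hc. replace (f' n c * (t + h - t) / h - f' n t) with (f' n c - f' n t)
          by (field; auto).
        eapply Rle_trans. apply Rabs_triang. rewrite Rabs_Ropp. pose proof (Hb n c). lra. }
  destruct (series_lim (fun d h => h <> 0 /\ Rabs h < d)
              ltac:(intros d1 d2 p Hd12 [H1 H2]; split; auto; lra)
              G (fun n => 2 * M n) HK Hb2) with eps as [d [Hd0 Hdd]]; auto.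
  { intros n e He. pose proof (proj1 (is_derive_Reals (f n) t (f' n t)) (Hd n t)) as D.
    destruct (D e He) as [del Hdel]. exists del. split. apply cond_pos.
    intros h [Hh1 Hh2]. apply Hdel; auto. }
  exists (mkposreal d Hd0). simpl. intros h Hh1 Hh2.
  specialize (Hdd h (conj Hh1 Hh2)).
  replace ((Series (fun n => f n (t + h)) - Series (fun n => f n t)) / h - Series (fun n => f' n t))
    with (Series (G h)); auto.
  unfold G. rewrite Series_minus; auto.
  - unfold Rdiv. rewrite Series_scal_r. rewrite Series_minus; auto.
  - unfold Rdiv. apply ex_series_scal_r.
    apply ex_series_ext with (fun n => plus (f n (t + h)) (opp (f n t))). intros; reflexivity.
    apply (@ex_series_minus R_AbsRing R_NormedModule); auto.
Qed.

Lemma series_cont2 (F : nat -> R -> R -> R) (M : nat -> R) x y :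
  (forall n, continuity_2d_pt (F n) x y) -> (forall n u v, Rabs (F n u v) <= M n) ->
  ex_series M -> continuity_2d_pt (fun u v => Series (fun n => F n u v)) x y.
Proof.
  intros Hc Hb HM eps.
  set (G := fun (p : R * R) n => F n (fst p) (snd p) - F n x y).
  assert (HK : ex_series (fun n => 2 * M n)).
  { apply ex_series_ext with (fun n => M n * 2);
      [intros; simpl; ring| apply ex_series_scal_r; auto]. }
  assert (Hb2 : forall p n, Rabs (G p n) <= 2 * M n).
  { intros p n. unfold G. eapply Rle_trans. apply Rabs_triang. rewrite Rabs_Ropp.
    pose proof (Hb n (fst p) (snd p)); pose proof (Hb n x y). lra. }
  destruct (series_lim (fun d p => Rabs (fst p - x) < d /\ Rabs (snd p - y) < d)
              ltac:(intros d1 d2 p Hd12 [H1 H2]; split; lra)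
              G (fun n => 2 * M n) HK Hb2) with eps as [d [Hd0 Hdd]].
  { intros n e He. destruct (Hc n (mkposreal e He)) as [del Hdel]. exists del. split. apply cond_pos.
    intros p [H1 H2]. apply Hdel; auto. }
  { apply cond_pos. }
  exists (mkposreal d Hd0). simpl. intros u v Hu Hv.
  specialize (Hdd (u, v) (conj Hu Hv)).
  replace (Series (fun n => F n u v) - Series (fun n => F n x y)) with (Series (G (u, v))); auto.
  unfold G; simpl. rewrite Series_minus; auto; apply ex_series_bound with M; auto.
Qed.

Definition lin (d : dir) (F : R -> R -> R) (x y : R) : R -> R :=
  match d with DX => fun t => F t y | DY => fun t => F x t end.
Definition pt (d : dir) (x y : R) : R := match d with DX => x | DY => y end.

Lemma series_smooth (T : nat -> R -> R -> R) :
  (forall n, Sm (T n)) ->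
  (forall w, exists M, ex_series M /\ forall n x y, Rabs (pdw w (T n) x y) <= M n) ->
  (forall w, pdw w (fun x y => Series (fun n => T n x y)) = fun x y => Series (fun n => pdw w (T n) x y))
  /\ Sm (fun x y => Series (fun n => T n x y)).
Proof.
  intros HT HB.
  assert (KEY : forall w d x y,
     is_derive (lin d (fun x y => Series (fun n => pdw w (T n) x y)) x y) (pt d x y)
               (Series (fun n => pdw (d :: w) (T n) x y))).
  { intros w d x y.
    destruct (HB (d :: w)) as [M [HM HMb]].
    destruct (HB w) as [M0 [HM0 HM0b]].
    destruct d; simpl.
    - apply (series_derive (fun n t => pdw w (T n) t y) (fun n t => pd DX (pdw w (T n)) t y) M x).
      + intros n u. apply Derive_correct. apply (Sm_ex (T n) DX w u y (HT n)).
      + intros n u. apply (HMb n u y).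
      + auto.
      + intros u. apply ex_series_bound with M0. auto. intros; apply HM0b.
    - apply (series_derive (fun n t => pdw w (T n) x t) (fun n t => pd DY (pdw w (T n)) x t) M y).
      + intros n u. apply Derive_correct. apply (Sm_ex (T n) DY w x u (HT n)).
      + intros n u. apply (HMb n x u).
      + auto.
      + intros u. apply ex_series_bound with M0. auto. intros; apply HM0b. }
  assert (P1 : forall w, pdw w (fun x y => Series (fun n => T n x y)) = fun x y => Series (fun n => pdw w (T n) x y)).
  { induction w as [|d w IH]; simpl; auto. rewrite IH.
    apply functional_extensionality; intro x; apply functional_extensionality; intro y.
    pose proof (is_derive_unique _ _ _ (KEY w d x y)) as E.
    destruct d; simpl in *; exact E. }
  split; auto.
  intros r w x y _. rewrite P1. split; [|split].
  - exists (Series (fun n => pdw (DX :: w) (T n) x y)). exact (KEY w DX x y).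
  - exists (Series (fun n => pdw (DY :: w) (T n) x y)). exact (KEY w DY x y).
  - apply (proj2 (cont_iff (fun x y => Series (fun n => pdw w (T n) x y)) x y)).
    destruct (HB w) as [M0 [HM0 HM0b]].
    apply series_cont2 with M0; auto.
    intros n. apply (sm_cont _ (T n) w x y (HT n _) (in_disk_big x y)).
Qed.


Lemma pdw_repX f n : pdw (repeat DX n) (fun x y => f x) = fun x y => Derive_n f n x.
Proof. induction n as [|n IH]; simpl; auto. rewrite IH. reflexivity. Qed.

Lemma Sm1_of_Sm f : Sm (fun x y => f x) -> Sm1 f.
Proof.
  intros H n x. pose proof (Sm_ex (fun x y => f x) DX (repeat DX n) x 0 H) as E.
  rewrite pdw_repX in E. exact E.
Qed.

Lemma Sm1_mult f g : Sm1 f -> Sm1 g -> Sm1 (fun x => f x * g x).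
Proof.
  intros Hf Hg. apply Sm1_of_Sm.
  apply (Sm_mult (fun x y => f x) (fun x y => g x)); intros r; apply Sm1_smooth_sep1; auto.
Qed.

Lemma Sm1_plus f g : Sm1 f -> Sm1 g -> Sm1 (fun x => f x + g x).
Proof.
  intros Hf Hg. apply Sm1_of_Sm.
  apply (Sm_plus (fun x y => f x) (fun x y => g x)); intros r; apply Sm1_smooth_sep1; auto.
Qed.

Lemma Sm1_from_deriv f g : (forall x, is_derive f x (g x)) -> Sm1 g -> Sm1 f.
Proof.
  intros H Hg n x.
  assert (E : Derive f = g).
  { apply functional_extensionality; intro t; apply is_derive_unique; auto. }
  destruct n as [|n].
  - simpl. eexists; apply H.
  - rewrite Derive_n_S, E. apply Hg.
Qed.

Lemma Dn_affine f al be : Sm1 f -> forall n,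
  Derive_n (fun u => f (al + be * u)) n = fun u => be ^ n * Derive_n f n (al + be * u).
Proof.
  intros Hf n; induction n as [|n IH].
  - apply functional_extensionality; intro u; simpl; ring.
  - apply functional_extensionality; intro u.
    change (Derive (Derive_n (fun u => f (al + be * u)) n) u = be ^ S n * Derive_n f (S n) (al + be * u)).
    rewrite IH. apply is_derive_unique.
    replace (be ^ S n * Derive_n f (S n) (al + be * u))
      with (be ^ n * (scal be (Derive (Derive_n f n) (al + be * u)))) by (simpl; unfold scal; simpl; unfold mult; simpl; ring).
    apply is_derive_scal.
    apply (is_derive_comp (Derive_n f n) (fun u => al + be * u)).
    + apply Derive_correct. apply Hf.
    + auto_derive; auto. ring.
Qed.

Lemma Sm1_affine f al be : Sm1 f -> Sm1 (fun u => f (al + be * u)).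
Proof.
  intros Hf n x. rewrite (Dn_affine f al be Hf n).
  apply ex_derive_scal.
  apply (ex_derive_comp (Derive_n f n) (fun u => al + be * u)).
  - apply Hf.
  - auto_derive; auto.
Qed.

Fixpoint peval (l : list R) (s : R) : R :=
  match l with nil => 0 | c :: l => c + s * peval l s end.

Fixpoint padd (l1 l2 : list R) : list R :=
  match l1, l2 with
  | nil, _ => l2
  | _, nil => l1
  | c1 :: l1, c2 :: l2 => (c1 + c2) :: padd l1 l2
  end.

Lemma peval_add l1 l2 s : peval (padd l1 l2) s = peval l1 s + peval l2 s.
Proof.
  revert l2; induction l1 as [|c1 l1 IH]; intros [|c2 l2]; simpl; try ring.
  rewrite IH; ring.
Qed.

Definition pscal (c : R) (l : list R) := map (Rmult c) l.
Lemma peval_scal c l s : peval (pscal c l) s = c * peval l s.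
Proof. induction l as [|d l IH]; simpl; [ring|]. rewrite IH; ring. Qed.

Fixpoint pder (l : list R) : list R :=
  match l with nil => nil | c :: l => padd l (0 :: pder l) end.

Lemma peval_der l s : is_derive (peval l) s (peval (pder l) s).
Proof.
  apply is_derive_Reals.
  induction l as [|c l IH]; simpl.
  - apply (derivable_pt_lim_const 0).
  - rewrite peval_add. simpl.
    pose proof (derivable_pt_lim_plus (fct_cte c) (mult_fct id (peval l)) s 0 _
      (derivable_pt_lim_const c s) (derivable_pt_lim_mult id (peval l) s 1 _ (derivable_pt_lim_id s) IH)) as D.
    replace (peval l s + (0 + s * peval (pder l) s)) with (0 + (1 * peval l s + id s * peval (pder l) s))
      by (unfold id; ring).
    exact D.
Qed.

Lemma pbound l : exists A k, 0 <= A /\ forall s, 0 <= s -> Rabs (peval l s) <= A * (1 + s) ^ k.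
Proof.
  induction l as [|c l IH].
  - exists 0, 0%nat. split; [lra|]. intros; simpl. rewrite Rabs_R0; lra.
  - destruct IH as [A [k [HA H]]]. exists (Rabs c + A), (S k). split.
    { pose proof (Rabs_pos c); lra. }
    intros s Hs. simpl. specialize (H s Hs).
    assert (P1 : 1 <= (1 + s) ^ k) by (apply pow_R1_Rle; lra).
    pose proof (Rabs_pos c).
    eapply Rle_trans. apply Rabs_triang. rewrite Rabs_mult, (Rabs_right s) by lra.
    pose proof (Rabs_pos (peval l s)).
    set (Y := (1 + s) ^ k) in *. set (P := Rabs (peval l s)) in *.
    assert (s * P <= s * (A * Y)) by (apply Rmult_le_compat_l; lra).
    assert (s * (A * Y) <= (1 + s) * (A * Y)) by (apply Rmult_le_compat_r; nra).
    assert (1 <= (1 + s) * Y) by nra.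
    assert (Rabs c <= Rabs c * ((1 + s) * Y)) by nra.
    nra.
Qed.

Lemma exp_mul_nat n y : exp (INR n * y) = exp y ^ n.
Proof.
  induction n as [|n IH]. simpl. rewrite Rmult_0_l, exp_0; auto.
  rewrite S_INR. replace ((INR n + 1) * y) with (INR n * y + y) by ring.
  rewrite exp_plus, IH. simpl; ring.
Qed.

Lemma exp_lower m x : 0 <= x -> (x / INR (S m)) ^ (S m) <= exp x.
Proof.
  intros Hx. assert (Hc : 0 < INR (S m)) by (apply lt_0_INR; lia).
  set (y := x / INR (S m)).
  assert (Hy : 0 <= y) by (unfold y; apply Rdiv_le_0_compat; lra).
  replace x with (INR (S m) * y) by (unfold y; field; lra).
  rewrite exp_mul_nat. apply pow_incr. split; auto.
  pose proof (exp_ineq1_le y). lra.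
Qed.

Lemma poly_exp_bound k s : 0 <= s ->
  (1 + s) ^ k * exp (- s) <= exp 1 * INR (S k) ^ (S k) / (1 + s).
Proof.
  intros Hs. set (X := 1 + s). set (c := INR (S k)).
  assert (HX : 0 < X) by (unfold X; lra). assert (Hc : 0 < c) by (apply lt_0_INR; lia).
  pose proof (exp_lower k X ltac:(lra)) as H. fold c in H.
  unfold Rdiv in H. rewrite Rpow_mult_distr, pow_inv in H.
  assert (E : exp (- s) = exp 1 / exp X) by (unfold X, Rdiv; rewrite <- exp_Ropp, <- exp_plus; f_equal; ring).
  rewrite E.
  assert (HXk : 0 < X ^ k) by (apply pow_lt; auto).
  assert (Hck : 0 < c ^ S k) by (apply pow_lt; auto).
  assert (HeX : 0 < exp X) by apply exp_pos.
  assert (He1 : 0 < exp 1) by apply exp_pos.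
  (* H : X^(S k) * / c^(S k) <= exp X *)
  assert (H' : X ^ S k <= exp X * c ^ S k).
  { apply Rmult_le_reg_r with (/ c ^ S k). apply Rinv_0_lt_compat; auto.
    rewrite Rmult_assoc, Rinv_r by lra. lra. }
  unfold Rdiv.
  apply Rmult_le_reg_r with (exp X * X). nra.
  replace (X ^ k * (exp 1 * / exp X) * (exp X * X)) with (exp 1 * (X ^ S k)) by (simpl; field; lra).
  replace (exp 1 * c ^ S k * / X * (exp X * X)) with (exp 1 * (exp X * c ^ S k)) by (field; lra).
  apply Rmult_le_compat_l; lra.
Qed.

Lemma flat_lim l : forall eps, 0 < eps -> exists d, 0 < d /\
  forall h, 0 < h < d -> Rabs (peval l (/ h)) * exp (- / h) < eps.
Proof.
  intros eps Heps. destruct (pbound l) as [A [k [HA Hb]]].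
  set (C := A * (exp 1 * INR (S k) ^ S k)).
  assert (HC : 0 <= C).
  { unfold C. apply Rmult_le_pos; auto. apply Rmult_le_pos. left; apply exp_pos.
    apply pow_le. apply pos_INR. }
  exists (eps / (C + 1)). split. apply Rdiv_lt_0_compat; lra.
  intros h [Hh1 Hh2].
  assert (Hs : 0 <= / h) by (left; apply Rinv_0_lt_compat; auto).
  specialize (Hb (/ h) Hs). pose proof (poly_exp_bound k (/ h) Hs) as P.
  assert (He : 0 < exp (- / h)) by apply exp_pos.
  assert (Q : Rabs (peval l (/ h)) * exp (- / h) <= C / (1 + / h)).
  { eapply Rle_trans. apply Rmult_le_compat_r. lra. exact Hb.
    assert (A * (1 + / h) ^ k * exp (- / h) <= A * (exp 1 * INR (S k) ^ S k / (1 + / h)))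
      by (rewrite Rmult_assoc; apply Rmult_le_compat_l; auto).
    replace (C / (1 + / h)) with (A * (exp 1 * INR (S k) ^ S k / (1 + / h))) by (unfold C, Rdiv; ring).
    auto. }
  assert (Q2 : C / (1 + / h) <= C * h).
  { unfold Rdiv. apply Rmult_le_compat_l; auto.
    replace h with (/ / h) at 2 by (field; lra).
    apply Rinv_le_contravar. apply Rinv_0_lt_compat; auto. lra. }
  assert (Q3 : C * h < eps).
  { apply Rle_lt_trans with ((C + 1) * h). nra.
    apply Rmult_lt_reg_l with (/ (C + 1)). apply Rinv_0_lt_compat; lra.
    rewrite <- Rmult_assoc, Rinv_l by lra. unfold Rdiv in Hh2. lra. }
  lra.
Qed.

Definition psi_l (l : list R) (t : R) : R :=
  if Rle_dec t 0 then 0 else peval l (/ t) * exp (- / t).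
Definition dl l := 0 :: 0 :: padd l (pscal (-1) (pder l)).

Lemma is_derive_eq (f : R -> R) x l1 l2 : is_derive f x l1 -> l1 = l2 -> is_derive f x l2.
Proof. intros H ->; auto. Qed.

Lemma psi_deriv l t : is_derive (psi_l l) t (psi_l (dl l) t).
Proof.
  destruct (Rtotal_order t 0) as [Ht|[Ht|Ht]].
  -
    apply is_derive_ext_loc with (fun _ => 0).
    + apply loc_R with (mkposreal (- t) ltac:(lra)). simpl. intros u Hu.
      unfold psi_l. destruct (Rle_dec u 0); auto.
      exfalso. apply Rabs_def2 in Hu. lra.
    + unfold psi_l. destruct (Rle_dec t 0); [|lra]. apply (is_derive_const 0).
  -
    subst t. apply is_derive_Reals. intros eps Heps.
    destruct (flat_lim (0 :: l) eps Heps) as [d [Hd Hdd]].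
    exists (mkposreal d Hd). simpl. intros h Hh Hhd.
    unfold psi_l. destruct (Rle_dec 0 0); [|lra]. destruct (Rle_dec (0 + h) 0).
    + replace ((0 - 0) / h - 0) with 0 by (field; auto). rewrite Rabs_R0; auto.
    + rewrite Rplus_0_l in *.
      assert (Hh0 : 0 < h) by lra.
      assert (Hh1 : h < d) by (apply Rabs_def2 in Hhd; lra).
      specialize (Hdd h (conj Hh0 Hh1)).
      simpl in Hdd.
      replace ((peval l (/ h) * exp (- / h) - 0) / h - 0)
        with ((0 + / h * peval l (/ h)) * exp (- / h)) by (field; lra).
      rewrite Rabs_mult, (Rabs_right (exp _)) by (left; apply exp_pos). auto.
  -
    apply is_derive_ext_loc with (fun u => peval l (/ u) * exp (- / u)).
    + apply loc_R with (mkposreal t Ht). simpl. intros u Hu.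
      unfold psi_l. destruct (Rle_dec u 0); auto.
      exfalso. apply Rabs_def2 in Hu. lra.
    + assert (Dinv : is_derive (fun u => / u) t (- / (t * t))).
      { auto_derive. lra. field. lra. }
      pose proof (is_derive_comp (peval l) (fun u => / u) t _ _ (peval_der l (/ t)) Dinv) as D1.
      assert (D2 : is_derive (fun u => exp (- / u)) t (exp (- / t) * / (t * t))).
      { auto_derive. lra. field. lra. }
      pose proof (is_derive_mult (fun u => peval l (/ u)) (fun u => exp (- / u)) t _ _ D1 D2
                    ltac:(intros; apply Rmult_comm)) as D3.
      eapply is_derive_eq. exact D3.
      unfold psi_l. destruct (Rle_dec t 0); [lra|].
      unfold dl. simpl peval. rewrite peval_add, peval_scal.
      change (scal (- / (t * t)) (peval (pder l) (/ t))) with (- / (t * t) * peval (pder l) (/ t)).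
      change (plus (mult (- / (t * t) * peval (pder l) (/ t)) (exp (- / t)))
                   (mult (peval l (/ t)) (exp (- / t) * / (t * t))))
        with (- / (t * t) * peval (pder l) (/ t) * exp (- / t) + peval l (/ t) * (exp (- / t) * / (t * t))).
      match goal with |- ?A = ?B => change (@eq R A B) end. field. lra.
Qed.

Lemma Derive_psi l : Derive (psi_l l) = psi_l (dl l).
Proof. apply functional_extensionality; intro t; apply is_derive_unique, psi_deriv. Qed.

Lemma Sm1_psi l : Sm1 (psi_l l).
Proof.
  intros n; revert l; induction n as [|n IH]; intros l x.
  - simpl. eexists; apply psi_deriv.
  - rewrite Derive_n_S, Derive_psi. apply IH.
Qed.

Definition psi := psi_l (1 :: nil).
Lemma psi_pos t : 0 < t -> 0 < psi t.
Proof.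
  intros Ht. unfold psi, psi_l. destruct (Rle_dec t 0); [lra|]. simpl.
  rewrite Rmult_0_r, Rplus_0_r, Rmult_1_l. apply exp_pos.
Qed.
Lemma psi_zero t : t <= 0 -> psi t = 0.
Proof. intros Ht. unfold psi, psi_l. destruct (Rle_dec t 0); [auto|lra]. Qed.
Lemma Sm1_psi1 : Sm1 psi.
Proof. apply Sm1_psi. Qed.


Definition Gf (t : R) : R := psi t * psi (1 + -1 * t).

Lemma Sm1_Gf : Sm1 Gf.
Proof. apply Sm1_mult. apply Sm1_psi1. apply (Sm1_affine psi 1 (-1)), Sm1_psi1. Qed.

Lemma Gf_cont t : continuous Gf t.
Proof. apply (ex_derive_continuous Gf). apply (Sm1_Gf 0%nat t). Qed.

Lemma psi_nonneg t : 0 <= psi t.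
Proof. destruct (Rle_dec t 0). rewrite psi_zero; lra. left; apply psi_pos; lra. Qed.

Lemma Gf_nonneg t : 0 <= Gf t.
Proof. unfold Gf. apply Rmult_le_pos; apply psi_nonneg. Qed.

Lemma Gf_pos t : 0 < t < 1 -> 0 < Gf t.
Proof. intros. unfold Gf. apply Rmult_lt_0_compat; apply psi_pos; lra. Qed.

Lemma Gf_zero t : t <= 0 \/ 1 <= t -> Gf t = 0.
Proof.
  intros [H|H]; unfold Gf. rewrite psi_zero by lra; ring.
  rewrite (psi_zero (1 + -1 * t)) by lra; ring.
Qed.

Definition Iint (t : R) : R := RInt Gf 0 t.

Lemma exRInt a b : ex_RInt Gf a b.
Proof. apply (@ex_RInt_continuous R_CompleteNormedModule). intros; apply Gf_cont. Qed.

Lemma I_deriv t : is_derive Iint t (Gf t).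
Proof.
  apply (is_derive_RInt Gf Iint 0 t).
  - exists (mkposreal 1 Rlt_0_1). intros b _. apply (@RInt_correct R_CompleteNormedModule), exRInt.
  - apply Gf_cont.
Qed.

Lemma I_neg t : t <= 0 -> Iint t = 0.
Proof.
  intros Ht. unfold Iint. rewrite (RInt_ext Gf (fun _ => 0)).
  - rewrite RInt_const. unfold scal; simpl; unfold mult; simpl; ring.
  - intros x Hx. rewrite Rmin_right, Rmax_left in Hx by lra. apply Gf_zero; lra.
Qed.

Lemma I_big t : 1 <= t -> Iint t = Iint 1.
Proof.
  intros Ht. unfold Iint. rewrite <- (RInt_Chasles Gf 0 1 t) by apply exRInt.
  rewrite (RInt_ext Gf (fun _ => 0) 1 t).
  - rewrite RInt_const. unfold scal, plus; simpl; unfold mult, plus; simpl. ring.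
  - intros x Hx. rewrite Rmin_left, Rmax_right in Hx by lra. apply Gf_zero; lra.
Qed.

Lemma I_mvt a b : a < b -> exists c, a <= c <= b /\ Iint b - Iint a = Gf c * (b - a).
Proof.
  intros Hab. destruct (MVT_gen Iint a b Gf) as [c [Hc E]].
  - intros; apply I_deriv.
  - intros; apply continuity_pt_filterlim. apply (ex_derive_continuous Iint). eexists; apply I_deriv.
  - exists c. rewrite Rmin_left, Rmax_right in Hc by lra. auto.
Qed.

Lemma I1_pos : 0 < Iint 1.
Proof.
  destruct (I_mvt 0 (1/4)) as [c1 [H1 E1]]; [lra|].
  destruct (I_mvt (1/4) (3/4)) as [c2 [H2 E2]]; [lra|].
  destruct (I_mvt (3/4) 1) as [c3 [H3 E3]]; [lra|].
  rewrite (I_neg 0) in E1 by lra.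
  pose proof (Gf_nonneg c1); pose proof (Gf_nonneg c3); pose proof (Gf_pos c2 ltac:(lra)).
  nra.
Qed.

Definition St (t : R) : R := / Iint 1 * Iint t.

Lemma Sm1_St : Sm1 St.
Proof.
  apply Sm1_from_deriv with (fun t => / Iint 1 * Gf t).
  - intros; unfold St. apply is_derive_scal, I_deriv.
  - apply Sm1_scal, Sm1_Gf.
Qed.

Lemma St_neg t : t <= 0 -> St t = 0.
Proof. intros; unfold St; rewrite (I_neg t) by auto; ring. Qed.
Lemma St_big t : 1 <= t -> St t = 1.
Proof. intros; unfold St; rewrite (I_big t) by auto. pose proof I1_pos. field; lra. Qed.

Definition chi (u : R) : R := St (2 + 2 * u) * St (2 + -2 * u).

Lemma Sm1_chi : Sm1 chi.
Proof. apply Sm1_mult; apply Sm1_affine, Sm1_St. Qed.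


Lemma abs_le u c : Rabs u <= c -> - c <= u <= c.
Proof. intros H. destruct (Rcase_abs u); [rewrite Rabs_left in H|rewrite Rabs_right in H]; lra. Qed.
Lemma abs_ge u c : c <= Rabs u -> c <= u \/ u <= - c.
Proof. intros H. destruct (Rcase_abs u); [rewrite Rabs_left in H|rewrite Rabs_right in H]; lra. Qed.

Lemma chi_one u : Rabs u <= 1/2 -> chi u = 1.
Proof. intros Hu. apply abs_le in Hu. unfold chi. rewrite !St_big by lra. ring. Qed.

Lemma chi_zero u : 1 <= Rabs u -> chi u = 0.
Proof.
  intros Hu. apply abs_ge in Hu. unfold chi. destruct Hu.
  - rewrite (St_neg (2 + -2 * u)) by lra. ring.
  - rewrite (St_neg (2 + 2 * u)) by lra. ring.
Qed.

Definition phi (m : nat) (u : R) : R := u ^ m * chi u.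

Lemma Sm1_phi m : Sm1 (phi m).
Proof. apply Sm1_mult. apply Sm1_pow. apply Sm1_chi. Qed.

Lemma phi_small m u : Rabs u <= 1/2 -> phi m u = u ^ m.
Proof. intros; unfold phi; rewrite chi_one by auto; ring. Qed.

Lemma Dn_zero_loc (f : R -> R) k u :
  locally u (fun t => f t = 0) -> Derive_n f k u = 0.
Proof.
  intros H. rewrite (Derive_n_ext_loc f (fun _ => 0) k u H).
  destruct k. simpl. reflexivity. apply Derive_n_const.
Qed.

Lemma phi_bound m k : exists B, 0 <= B /\ forall u, Rabs (Derive_n (phi m) k u) <= B.
Proof.
  destruct (continuity_ab_maj (fun u => Rabs (Derive_n (phi m) k u)) (-1) 1) as [M [HM _]].
  - lra.
  - intros c _. apply (continuity_pt_comp (Derive_n (phi m) k) Rabs).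
    apply Sm1_cont, Sm1_phi. apply Rcontinuity_abs.
  - exists (Rabs (Derive_n (phi m) k M)). split. apply Rabs_pos.
    intros u. destruct (Rle_dec (Rabs u) 1) as [H|H].
    + apply HM. apply abs_le; auto.
    + rewrite Dn_zero_loc. rewrite Rabs_R0; apply Rabs_pos.
      apply abs_ge in H ; [|lra] || idtac.
      assert (H1 : 1 < Rabs u) by lra.
      apply loc_R with (mkposreal (Rabs u - 1) ltac:(lra)). simpl. intros t Ht.
      unfold phi. rewrite chi_zero. ring.
      pose proof (Rabs_triang_inv u (u - t)). replace (u - (u - t)) with t in H0 by ring.
      rewrite Rabs_minus_sym in Ht. lra.
Qed.

Definition bet (m : nat) (e : R) (x : R) : R := e ^ m * phi m (0 + / e * x).

Lemma Sm1_bet m e : Sm1 (bet m e).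
Proof. apply Sm1_scal. apply Sm1_affine, Sm1_phi. Qed.

Lemma Dn_bet m e k x :
  Derive_n (bet m e) k x = e ^ m * ((/ e) ^ k * Derive_n (phi m) k (0 + / e * x)).
Proof.
  unfold bet. rewrite Dn_scal. rewrite (Dn_affine (phi m) 0 (/ e) (Sm1_phi m)). reflexivity.
Qed.

Lemma bet_small m e x : 0 < e -> Rabs x <= e / 2 -> bet m e x = x ^ m.
Proof.
  intros He Hx. unfold bet. rewrite phi_small.
  - rewrite Rplus_0_l, <- Rpow_mult_distr. rewrite <- Rmult_assoc, Rinv_r by lra.
    rewrite Rmult_1_l. reflexivity.
  - rewrite Rplus_0_l, Rabs_mult, Rabs_right by (left; apply Rinv_0_lt_compat; auto).
    apply Rmult_le_reg_l with e; auto. rewrite <- Rmult_assoc, Rinv_r by lra. lra.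
Qed.


Definition Bd (m k : nat) : R := proj1_sig (constructive_indefinite_description _ (phi_bound m k)).
Lemma Bd_spec m k : 0 <= Bd m k /\ forall u, Rabs (Derive_n (phi m) k u) <= Bd m k.
Proof. unfold Bd. destruct (constructive_indefinite_description _ _) as [B HB]. simpl. auto. Qed.

Lemma single_le_sum (f : nat -> R) j n : (forall i, 0 <= f i) -> (j <= n)%nat -> f j <= sum_f_R0 f n.
Proof.
  intros H Hj. induction n as [|n IH].
  - assert (j = 0%nat) by lia. subst. simpl. lra.
  - simpl. destruct (Nat.eq_dec j (S n)).
    + subst. assert (0 <= sum_f_R0 f n) by (apply cond_pos_sum; auto). lra.
    + pose proof (H (S n)). assert (f j <= sum_f_R0 f n) by (apply IH; lia). lra.
Qed.

Lemma sum_nonneg (f : nat -> R) n : (forall i, 0 <= f i) -> 0 <= sum_f_R0 f n.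
Proof. intros; apply cond_pos_sum; auto. Qed.


Definition Ad (C : nat -> nat -> R) (d : nat) : R :=
  sum_f_R0 (fun i => Rabs (C d i) * sum_f_R0 (fun k => sum_f_R0 (fun l => Bd i k * Bd (d - i) l) d) d) d.
Definition ep C d : R := / (2 ^ d * (1 + Ad C d)).
Definition Tb C d : R -> R -> R :=
  fun x y => sum_f_R0 (fun i => C d i * sep (bet i (ep C d)) (bet (d - i) (ep C d)) x y) d.

Lemma Ad_nonneg C d : 0 <= Ad C d.
Proof.
  apply sum_nonneg; intros i. apply Rmult_le_pos. apply Rabs_pos.
  apply sum_nonneg; intros k; apply sum_nonneg; intros l.
  apply Rmult_le_pos; apply Bd_spec.
Qed.

Lemma ep_pos C d : 0 < ep C d.
Proof.
  unfold ep. apply Rinv_0_lt_compat. apply Rmult_lt_0_compat. apply pow_lt; lra.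
  pose proof (Ad_nonneg C d); lra.
Qed.

Lemma ep_le1 C d : ep C d <= 1.
Proof.
  unfold ep. pose proof (Ad_nonneg C d). assert (1 <= 2 ^ d) by (apply pow_R1_Rle; lra).
  rewrite <- Rinv_1. apply Rinv_le_contravar. lra. nra.
Qed.

Lemma epA C d : ep C d * Ad C d <= (/ 2) ^ d.
Proof.
  unfold ep. pose proof (Ad_nonneg C d). assert (0 < 2 ^ d) by (apply pow_lt; lra).
  rewrite pow_inv. rewrite Rinv_mult.
  apply Rle_trans with (/ 2 ^ d * 1).
  - rewrite Rmult_assoc. apply Rmult_le_compat_l. left; apply Rinv_0_lt_compat; auto.
    apply Rmult_le_reg_l with (1 + Ad C d). lra.
    rewrite <- Rmult_assoc, Rinv_r by lra. lra.
  - lra.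
Qed.

Lemma Sm_Tb C d : Sm (Tb C d).
Proof. apply Sm_sum. intros i. apply Sm_scal. apply Sm_sep; apply Sm1_bet. Qed.

Lemma pow_le_1 e n : 0 <= e <= 1 -> e ^ n <= 1.
Proof.
  intros He. induction n; simpl. lra.
  assert (0 <= e ^ n) by (apply pow_le; lra). nra.
Qed.

Lemma pow_ep_le C d j : (j < d)%nat -> ep C d ^ d * (/ ep C d) ^ j <= ep C d.
Proof.
  intros Hj. pose proof (ep_pos C d) as Hp. pose proof (ep_le1 C d).
  set (e := ep C d) in *.
  replace (e ^ d) with (e ^ (S (d - S j)) * e ^ j) by (rewrite <- pow_add; f_equal; lia).
  rewrite Rmult_assoc, <- Rpow_mult_distr, Rinv_r, pow1 by lra.
  rewrite Rmult_1_r. simpl.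
  assert (0 <= e ^ (d - S j)) by (apply pow_le; lra).
  assert (e ^ (d - S j) <= 1) by (apply pow_le_1; lra).
  nra.
Qed.

Lemma pdw_Tb C d w x y : pdw w (Tb C d) x y =
  sum_f_R0 (fun i => C d i * (Derive_n (bet i (ep C d)) (cx w) x * Derive_n (bet (d - i) (ep C d)) (cy w) y)) d.
Proof.
  unfold Tb. rewrite pdw_sum_g. 2:{ intros i. apply Sm_scal, Sm_sep; apply Sm1_bet. }
  apply sum_eq. intros i _. rewrite pdw_scal, pdw_sep. reflexivity.
Qed.

Lemma Dn_bet_bound m e k x : 0 < e -> Rabs (Derive_n (bet m e) k x) <= e ^ m * ((/ e) ^ k * Bd m k).
Proof.
  intros He. rewrite Dn_bet. rewrite !Rabs_mult.
  rewrite (Rabs_right (e ^ m)) by (left; apply pow_lt; auto).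
  rewrite (Rabs_right ((/ e) ^ k)) by (left; apply pow_lt; apply Rinv_0_lt_compat; auto).
  apply Rmult_le_compat_l. left; apply pow_lt; auto.
  apply Rmult_le_compat_l. left; apply pow_lt; apply Rinv_0_lt_compat; auto.
  apply Bd_spec.
Qed.

Definition Mb C k l d : R :=
  ep C d ^ d * (/ ep C d) ^ (k + l) * sum_f_R0 (fun i => Rabs (C d i) * (Bd i k * Bd (d - i) l)) d.

Lemma Mb_nonneg C k l d : 0 <= Mb C k l d.
Proof.
  pose proof (ep_pos C d). unfold Mb. apply Rmult_le_pos. apply Rmult_le_pos.
  apply pow_le; lra. apply pow_le; left; apply Rinv_0_lt_compat; lra.
  apply sum_nonneg; intros i. apply Rmult_le_pos. apply Rabs_pos.
  apply Rmult_le_pos; apply Bd_spec.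
Qed.

Lemma Tb_le C w d x y : Rabs (pdw w (Tb C d) x y) <= Mb C (cx w) (cy w) d.
Proof.
  rewrite pdw_Tb. pose proof (ep_pos C d) as He. set (e := ep C d) in *.
  eapply Rle_trans. apply sum_f_R0_triangle.
  unfold Mb. fold e. rewrite scal_sum.
  apply sum_Rle. intros i Hi.
  rewrite !Rabs_mult.
  pose proof (Dn_bet_bound i e (cx w) x He).
  pose proof (Dn_bet_bound (d - i) e (cy w) y He).
  pose proof (Rabs_pos (C d i)).
  pose proof (Rabs_pos (Derive_n (bet i e) (cx w) x)).
  pose proof (Rabs_pos (Derive_n (bet (d - i) e) (cy w) y)).
  replace (Rabs (C d i) * (Bd i (cx w) * Bd (d - i) (cy w)) * (e ^ d * (/ e) ^ (cx w + cy w)))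
    with (Rabs (C d i) * ((e ^ i * ((/ e) ^ cx w * Bd i (cx w))) * (e ^ (d - i) * ((/ e) ^ cy w * Bd (d - i) (cy w))))).
  - apply Rmult_le_compat_l; auto. apply Rmult_le_compat; auto.
  - assert (Ed : e ^ d = e ^ i * e ^ (d - i)) by (rewrite <- pow_add; f_equal; lia).
    rewrite Ed, pow_add. ring.
Qed.

Lemma Mb_series C k l : ex_series (Mb C k l).
Proof.
  apply (proj2 (@ex_series_incr_n R_AbsRing R_NormedModule (Mb C k l) (S (k + l)))).
  apply ex_series_bound with (fun j => (/ 2) ^ j).
  - apply ex_series_geom. rewrite Rabs_right; lra.
  - intros j. set (d := (S (k + l) + j)%nat).
    rewrite Rabs_right by (apply Rle_ge, Mb_nonneg).
    assert (Hd : (k + l < d)%nat) by (unfold d; lia).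
    pose proof (pow_ep_le C d (k + l) Hd).
    assert (S1 : sum_f_R0 (fun i => Rabs (C d i) * (Bd i k * Bd (d - i) l)) d <= Ad C d).
    { unfold Ad. apply sum_Rle. intros i Hi. apply Rmult_le_compat_l. apply Rabs_pos.
      apply Rle_trans with (sum_f_R0 (fun l' => Bd i k * Bd (d - i) l') d).
      - apply (single_le_sum (fun l' => Bd i k * Bd (d - i) l')). intros; apply Rmult_le_pos; apply Bd_spec. lia.
      - apply (single_le_sum (fun k' => sum_f_R0 (fun l' => Bd i k' * Bd (d - i) l') d)).
        intros; apply sum_nonneg; intros; apply Rmult_le_pos; apply Bd_spec. lia. }
    assert (S0 : 0 <= sum_f_R0 (fun i => Rabs (C d i) * (Bd i k * Bd (d - i) l)) d).
    { apply sum_nonneg; intros i. apply Rmult_le_pos. apply Rabs_pos. apply Rmult_le_pos; apply Bd_spec. }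
    assert (K0 : 0 <= ep C d ^ d * (/ ep C d) ^ (k + l)).
    { pose proof (ep_pos C d). apply Rmult_le_pos. apply pow_le; lra.
      apply pow_le; left; apply Rinv_0_lt_compat; lra. }
    unfold Mb. fold d.
    apply Rle_trans with (ep C d * Ad C d).
    + apply Rle_trans with (ep C d * sum_f_R0 (fun i => Rabs (C d i) * (Bd i k * Bd (d - i) l)) d).
      * apply Rmult_le_compat_r; auto.
      * apply Rmult_le_compat_l; auto. left; apply ep_pos.
    + eapply Rle_trans. apply epA. unfold d. rewrite pow_add.
      assert (0 < (/ 2) ^ j) by (apply pow_lt; lra).
      assert ((/ 2) ^ S (k + l) <= 1) by (apply pow_le_1; lra).
      assert (0 <= (/ 2) ^ S (k + l)) by (apply pow_le; lra). nra.
Qed.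

Lemma Series_zero : Series (fun _ => 0) = 0.
Proof.
  rewrite (Series_ext (fun _ => 0) (fun n => 0 * 1)) by (intros; ring).
  rewrite Series_scal_l. ring.
Qed.

Lemma Series_single N V : Series (fun d => if Nat.eqb N d then V else 0) = V.
Proof.
  rewrite (Series_incr_n_aux _ N).
  2:{ intros k Hk. replace (Nat.eqb N k) with false by (symmetry; apply Nat.eqb_neq; lia). auto. }
  rewrite Series_incr_1.
  - rewrite Nat.add_0_r, Nat.eqb_refl.
    rewrite (Series_ext _ (fun _ => 0)). rewrite Series_zero; ring.
    intros k. replace (Nat.eqb N (N + S k)) with false by (symmetry; apply Nat.eqb_neq; lia). auto.
  - apply ex_series_bound with (fun k => (/ 2) ^ k * Rabs V).
    + apply ex_series_scal_r. apply ex_series_geom. rewrite Rabs_right; lra.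
    + intros [|k].
      * rewrite Nat.add_0_r, Nat.eqb_refl. simpl. lra.
      * replace (Nat.eqb N (N + S k)) with false by (symmetry; apply Nat.eqb_neq; lia).
        rewrite Rabs_R0. apply Rmult_le_pos. apply pow_le; lra. apply Rabs_pos.
Qed.

Lemma disk_coord r x y : 0 < r -> in_disk r x y -> Rabs x <= r /\ Rabs y <= r.
Proof.
  unfold in_disk. intros Hr H. pose proof (sq_abs x); pose proof (sq_abs y).
  pose proof (Rabs_pos x); pose proof (Rabs_pos y). 
  pose proof (Rle_0_sqr x); pose proof (Rle_0_sqr y). unfold Rsqr in *.
  split; [destruct (Rle_dec (Rabs x) r) as [?|Hn]|destruct (Rle_dec (Rabs y) r) as [?|Hn]];
    auto; apply Rnot_le_lt in Hn; exfalso.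
  - assert (r * r < Rabs x * Rabs x) by (apply Rmult_le_0_lt_compat; lra). lra.
  - assert (r * r < Rabs y * Rabs y) by (apply Rmult_le_0_lt_compat; lra). lra.
Qed.

Lemma borel C : exists S, Sm S /\
  forall w, pdw w S 0 0 = C (length w) (cx w) * INR (fact (cx w)) * INR (fact (cy w)).
Proof.
  destruct (series_smooth (Tb C) (Sm_Tb C)) as [P1 P2].
  { intros w. exists (Mb C (cx w) (cy w)). split. apply Mb_series. intros; apply Tb_le. }
  exists (fun x y => Series (fun d => Tb C d x y)). split; auto.
  intros w. rewrite P1.
  rewrite (Series_ext _ (fun d => if Nat.eqb (length w) d then
      C (length w) (cx w) * INR (fact (cx w)) * INR (fact (cy w)) else 0)).
  - apply Series_single.
  - intros d.
    assert (E : pdw w (Tb C d) 0 0 = pdw w (hp d (C d)) 0 0).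
    { pose proof (ep_pos C d). assert (Hr : 0 < ep C d / 2) by lra.
      apply (pdw_ext_disk (ep C d / 2)). 2:{ apply in_disk0; lra. }
      intros x y Hxy. destruct (disk_coord _ x y Hr Hxy) as [Hx Hy].
      unfold Tb, hp. apply sum_eq. intros i _. unfold mono, sep.
      rewrite !bet_small; auto. }
    rewrite E, pdw_hp0.
    destruct (Nat.eqb (length w) d) eqn:Ed; auto.
    apply Nat.eqb_eq in Ed. subst. auto.
Qed.


Definition Cc h a b (d i : nat) : R :=
  if Nat.ltb d 3 then 0 else cf h a b (Zs h a b (d - 3)) d i.

Lemma ZF h a b : forall m w, pdw w (fun x y => Zs h a b m x y - qf a b x y) 0 0 =
  if Nat.leb (length w) (m + 2) then Cc h a b (length w) (cx w) * INR (fact (cx w)) * INR (fact (cy w)) else 0.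
Proof.
  intros m; induction m as [|m IH]; intros w.
  - assert (E : (fun x y => Zs h a b 0 x y - qf a b x y) = fun x y => 0 * qf a b x y).
    { apply functional_extensionality; intro x; apply functional_extensionality; intro y.
      simpl; ring. }
    rewrite E, pdw_scal. destruct (Nat.leb (length w) (0 + 2)) eqn:El; [|ring].
    apply Nat.leb_le in El. unfold Cc. replace (Nat.ltb (length w) 3) with true
      by (symmetry; apply Nat.ltb_lt; lia). ring.
  - assert (E : (fun x y => Zs h a b (S m) x y - qf a b x y) =
       fun x y => (Zs h a b m x y - qf a b x y) + hp (m + 3) (cf h a b (Zs h a b m) (m + 3)) x y).
    { apply functional_extensionality; intro x; apply functional_extensionality; intro y.
      simpl; ring. }
    assert (SZ : forall m, Sm (Zs h a b m)).
    { clear. induction m; simpl. apply Sm_q. apply Sm_plus; auto. apply Sm_hp. }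
    rewrite E, pdw_plus_g.
    2:{ apply Sm_minus; auto. apply Sm_q. }
    2:{ apply Sm_hp. }
    rewrite IH, pdw_hp0.
    assert (EC : forall i, Cc h a b (m + 3) i = cf h a b (Zs h a b m) (m + 3) i).
    { intros i. unfold Cc. replace (Nat.ltb (m + 3) 3) with false by (symmetry; apply Nat.ltb_ge; lia).
      replace (m + 3 - 3)%nat with m by lia. reflexivity. }
    destruct (Nat.leb_spec (length w) (m + 2));
    destruct (Nat.eqb_spec (length w) (m + 3));
    destruct (Nat.leb_spec (length w) (S m + 2)); try lia; try ring.
    rewrite e, EC. ring.
Qed.

Theorem corollary4p3 (h : R -> R -> R) (a b : R) :
  0 < a -> 0 < b -> Q_lin_indep a b ->
  (exists r, 0 < r /\ smooth_on_disk r h) ->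
  (* Taylor expansion at (0,0): h = a^2 x^2 + b^2 y^2 + O(order >= 3) *)
  h 0 0 = 0 ->
  pdw (DX :: nil) h 0 0 = 0 ->
  pdw (DY :: nil) h 0 0 = 0 ->
  pdw (DX :: DX :: nil) h 0 0 = 2 * a ^ 2 ->
  pdw (DX :: DY :: nil) h 0 0 = 0 ->
  pdw (DY :: DY :: nil) h 0 0 = 2 * b ^ 2 ->
  exists r, 0 < r /\ exists z : R -> R -> R,
    smooth_on_disk r z /\
    vanishes_inf_order_at0
      (fun x y => (pd DX z x y) ^ 2 + (pd DY z x y) ^ 2 - h x y).
Proof.
  intros Ha Hb _ [rh [Hrh Hh]] H0 H1 H2 H3 H4 H5.
  pose proof (base h a b rh Hrh Hh H0 H1 H2 H3 H4 H5) as VB.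
  pose proof (Zs_props h a b rh Hrh Ha Hb Hh VB) as ZP.
  destruct (borel (Cc h a b)) as [SS [SmS HS]].
  set (z := fun x y => qf a b x y + SS x y).
  assert (Smz : Sm z) by (apply Sm_plus; auto; apply Sm_q).
  exists 1. split; [lra|]. exists z. split; [apply Smz|].
  intros w.
  set (m := length w).
  destruct (ZP m) as (SZ & _ & VE).
  set (Z := Zs h a b m) in *.
  assert (K1 : V (m + 3) (fun x y => z x y - Z x y)).
  { intros w' Hw'.
    assert (E : (fun x y => z x y - Z x y) = fun x y => SS x y - (Z x y - qf a b x y)).
    { apply functional_extensionality; intro x; apply functional_extensionality; intro y.
      unfold z; ring. }
    assert (SZq : Sm (fun x y => Z x y - qf a b x y)) by (apply Sm_minus; auto; apply Sm_q).
    assert (D1 : in_disk 1 0 0) by (apply in_disk0; lra).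
    rewrite E. rewrite (pdw_minus 1 _ _ (SmS 1) (SZq 1) w' 0 0 D1).
    rewrite HS. unfold Z. rewrite ZF.
    replace (Nat.leb (length w') (m + 2)) with true by (symmetry; apply Nat.leb_le; lia). ring. }
  assert (Smd : Sm (fun x y => z x y - Z x y)) by (apply Sm_minus; auto).
  assert (EQ : (fun x y => (pd DX z x y) ^ 2 + (pd DY z x y) ^ 2 - h x y) =
    fun x y => Ef h Z x y +
      (pd DX (fun x y => z x y - Z x y) x y * (pd DX z x y + pd DX Z x y) +
       pd DY (fun x y => z x y - Z x y) x y * (pd DY z x y + pd DY Z x y))).
  { rewrite !pd_minus_g by auto.
    apply functional_extensionality; intro x; apply functional_extensionality; intro y.
    unfold Ef. ring. }
  rewrite EQ.
  assert (VV : V (m + 2)%nat (fun x y => Ef h Z x y +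
      (pd DX (fun x y => z x y - Z x y) x y * (pd DX z x y + pd DX Z x y) +
       pd DY (fun x y => z x y - Z x y) x y * (pd DY z x y + pd DY Z x y)))).
  { assert (SdX : Sm (pd DX (fun x y => z x y - Z x y))) by (apply Sm_pd; exact Smd).
    assert (SdY : Sm (pd DY (fun x y => z x y - Z x y))) by (apply Sm_pd; exact Smd).
    assert (SpX : Sm (fun x y => pd DX z x y + pd DX Z x y)) by (apply Sm_plus; apply Sm_pd; assumption).
    assert (SpY : Sm (fun x y => pd DY z x y + pd DY Z x y)) by (apply Sm_plus; apply Sm_pd; assumption).
    assert (Vd : forall d, V (m + 2)%nat (pd d (fun x y => z x y - Z x y))).
    { intros d. apply V_pd. replace (S (m + 2))%nat with (m + 3)%nat by lia. exact K1. }
    assert (VX : V (m + 2)%nat (fun x y => pd DX (fun x y => z x y - Z x y) x y * (pd DX z x y + pd DX Z x y))).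
    { replace (m + 2)%nat with (m + 2 + 0)%nat by lia.
      apply (V_mult 1); [lra|apply SdX|apply SpX|apply Vd|apply V_0]. }
    assert (VY : V (m + 2)%nat (fun x y => pd DY (fun x y => z x y - Z x y) x y * (pd DY z x y + pd DY Z x y))).
    { replace (m + 2)%nat with (m + 2 + 0)%nat by lia.
      apply (V_mult 1); [lra|apply SdY|apply SpY|apply Vd|apply V_0]. }
    assert (SX : Sm (fun x y => pd DX (fun x y => z x y - Z x y) x y * (pd DX z x y + pd DX Z x y)))
      by (apply Sm_mult; assumption).
    assert (SY : Sm (fun x y => pd DY (fun x y => z x y - Z x y) x y * (pd DY z x y + pd DY Z x y)))
      by (apply Sm_mult; assumption).
    apply (V_plus rh).
    - exact Hrh.
    - apply smooth_E; assumption.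
    - apply (Sm_plus _ _ SX SY).
    - apply V_mono with (m + 3)%nat; [lia|exact VE].
    - apply (V_plus 1); [lra|apply SX|apply SY|exact VX|exact VY]. }
  apply VV. unfold m. lia.
Qed.
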